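(* Assume the setting described in the context (quadratic nonlinearity with exponentially decaying semigroup estimators and forcing). Let $f_0\in F$, put $F_0:=\|f_0\|+NJ$, and assume $4KNF_0\le1$. Then VP$(f_0)$ has a global solution $\varphi:[0,+\infty)\to F$ and, for all $t\ge0$, $\|\varphi(t)\|\le F_0\,\mathcal X(4KNF_0)\,e^{-Bt}$, where $\mathcal X(z):=(1-\sqrt{1-z})/(z/2)$ for $z\in(0,1]$ and $\mathcal X(0):=1$.
   Context: Banach spaces over a common field. $X\hookrightarrow Y$ means $X$ is a dense subspace of $Y$ with continuous inclusion. Setting: $F_+,F,F_-$ Banach spaces with norms $\|\cdot\|_+,\|\cdot\|,\|\cdot\|_-$, $F_+\hookrightarrow F\hookrightarrow F_-$; $\mathcal A:F_+\to F_-$ linear with $\|\cdot\|_+$ equivalent on $F_+$ to $\|f\|_-+\|\mathcal Af\|_-$; $\mathcal A$ generates a strongly continuous semigroup $(e^{t\mathcal A})_{t\ge0}$ on $F_-$ (domain $F_+$); $e^{t\mathcal A}(F)\subset F$ ($t\ge0$) with $(f,t)\mapsto e^{t\mathcal A}f$ continuous $F\times[0,\infty)\to F$; $e^{t\mathcal A}(F_-)\subset F$ ($t>0$) with $(f,t)\mapsto e^{t\mathcal A}f$ continuous $F_-\times(0,\infty)\to F$. There are constants $B\ge0$, $N>0$ with $\|e^{t\mathcal A}f\|\le e^{-Bt}\|f\|$ ($t\ge0$, $f\in F$) and $\|e^{t\mathcal A}f\|\le\mu_-(t)e^{-Bt}\|f\|_-$ ($t>0$, $f\in F_-$), where $\mu_-\in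 C((0,\infty),(0,\infty))$, $\mu_-(t)=O(t^{-(1-\sigma)})$ as $t\to0^+$ for some $\sigma\in(0,1]$, and $\int_0^t\mu_-(t-s)e^{-Bs}ds\le N$ for all $t\ge0$. $\mathscr P:F\times F\to F_-$ bilinear with $\|\mathscr P(f,g)\|_-\le K\|f\|\|g\|$, $K\in(0,\infty)$; $\xi:[0,+\infty)\to F_-$ locally Lipschitz with $\|\xi(t)\|_-\le Je^{-2Bt}$ for all $t\ge0$, for a constant $J\ge0$; $\mathcal P(f,t):=\mathscr P(f,f)+\xi(t)$. VP$(f_0)$ asks for $\varphi\in C([0,T),F)$ with $\varphi(t)=e^{t\mathcal A}f_0+\int_0^te^{(t-s)\mathcal A}\mathcal P(\varphi(s),s)\,ds$ for $t\in[0,T)$. *)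

(* Defs.v *)
From Stdlib Require Import Reals Lra.
From Coquelicot Require Import Coquelicot.
Open Scope R_scope.

Definition linear_map {U V : NormedModule R_AbsRing} (f : U -> V) : Prop :=
  (forall x y, f (plus x y) = plus (f x) (f y)) /\
  (forall (a : R) x, f (scal a x) = scal a (f x)).

Definition bounded_linear_map {U V : NormedModule R_AbsRing} (f : U -> V) : Prop :=
  linear_map f /\ exists C : R, forall x, norm (f x) <= C * norm x.

Definition is_bilinear {U V W : NormedModule R_AbsRing} (P : U -> V -> W) : Prop :=
  (forall y, linear_map (fun x => P x y)) /\ (forall x, linear_map (fun y => P x y)).

Definition dense_embedding {U V : NormedModule R_AbsRing} (i : U -> V) : Prop :=
  bounded_linear_map i /\
  (forall x y, i x = i y -> x = y) /\
  (forall (v : V) (eps : R), 0 < eps -> exists u : U, norm (minus (i u) v) < eps).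

(* (A, domain given by the range of iD) generates the strongly continuous
   semigroup S on the space V. *)
Definition generates_C0_semigroup {D V : NormedModule R_AbsRing}
    (iD : D -> V) (A : D -> V) (S : R -> V -> V) : Prop :=
  (forall t, 0 <= t -> bounded_linear_map (S t)) /\
  (forall x, S 0 x = x) /\
  (forall t s x, 0 <= t -> 0 <= s -> S (t + s) x = S t (S s x)) /\
  (forall x t, 0 <= t -> forall eps, 0 < eps -> exists delta, 0 < delta /\
      forall s, 0 <= s -> Rabs (s - t) < delta -> norm (minus (S s x) (S t x)) < eps) /\
  (forall x v,
      filterlim (fun h => scal (/ h) (minus (S h x) x)) (at_right 0) (locally v)
      <-> exists y : D, x = iD y /\ v = A y).

Definition jointly_continuous_on {U V : NormedModule R_AbsRing}
    (I : R -> Prop) (T : R -> U -> V) : Prop :=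
  forall f t, I t -> forall eps, 0 < eps -> exists delta, 0 < delta /\
    forall g s, I s -> norm (minus g f) < delta -> Rabs (s - t) < delta ->
      norm (minus (T s g) (T t f)) < eps.

Definition continuous_on_nonneg {V : NormedModule R_AbsRing} (phi : R -> V) : Prop :=
  forall t, 0 <= t -> forall eps, 0 < eps -> exists delta, 0 < delta /\
    forall s, 0 <= s -> Rabs (s - t) < delta -> norm (minus (phi s) (phi t)) < eps.

Definition locally_lipschitz_nonneg {V : NormedModule R_AbsRing} (xi : R -> V) : Prop :=
  forall T, 0 <= T -> exists L, forall s t, 0 <= s <= T -> 0 <= t <= T ->
    norm (minus (xi t) (xi s)) <= L * Rabs (t - s).

Definition Xfun (z : R) : R :=
  if Req_EM_T z 0 then 1 else (1 - sqrt (1 - z)) / (z / 2).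

(* Main.v *)
Require Import Defs.
From Stdlib Require Import Reals Lra Lia ZArith Classical ClassicalEpsilon.
From Coquelicot Require Import Coquelicot.
Open Scope R_scope.

Lemma minus_plus_l {G : AbelianGroup} (s y : G) : minus (plus s y) s = y.
Proof.
  unfold minus. rewrite <- plus_assoc, (plus_comm y).
  transitivity (plus (plus s (opp s)) y). apply plus_assoc. rewrite plus_opp_r. apply plus_zero_l.
Qed.


Lemma minus_plus_plus {G : AbelianGroup} (a b c d : G) : minus (plus a b) (plus c d) = plus (minus a c) (minus b d).
Proof.
  unfold minus. rewrite opp_plus. rewrite <- !plus_assoc. f_equal.
  rewrite (plus_comm b). rewrite <- plus_assoc. f_equal. apply plus_comm.
Qed.

Lemma minus_opp_opp {G : AbelianGroup} (x y : G) : minus (opp x) (opp y) = opp (minus x y).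
Proof. unfold minus. symmetry. apply opp_plus. Qed.

Lemma exp_le x y : x <= y -> exp x <= exp y.
Proof. intros [H|H]. left; apply exp_increasing, H. subst; right; reflexivity. Qed.

Section Generic.
Context {V : NormedModule R_AbsRing}.

Lemma norm_scal_R (a : R) (x : V) : norm (scal a x) = Rabs a * norm x.
Proof.
  apply Rle_antisym; [exact (norm_scal a x)|].
  destruct (Req_dec a 0) as [->|Ha].
  - rewrite Rabs_R0, Rmult_0_l; apply norm_ge_0.
  - assert (H : norm x <= Rabs (/ a) * norm (scal a x)).
    { replace x with (scal (/a) (scal a x)) at 1.
      exact (norm_scal _ _).
      rewrite scal_assoc. change (mult (/a) a) with (/a * a).
      rewrite Rinv_l by exact Ha. exact (scal_one x). }
    rewrite Rabs_inv in H.
    assert (0 < Rabs a) by (apply Rabs_pos_lt; exact Ha).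
    apply (Rmult_le_compat_l (Rabs a)) in H; [|lra].
    rewrite <- Rmult_assoc, Rinv_r in H by lra. lra.
Qed.

Lemma norm_minus_sym (x y : V) : norm (minus x y) = norm (minus y x).
Proof.
  rewrite <- norm_opp, opp_minus. reflexivity.
Qed.

Lemma norm_triangle_minus (x y z : V) :
  norm (minus x z) <= norm (minus x y) + norm (minus y z).
Proof. rewrite (minus_trans y). apply norm_triangle. Qed.

Lemma norm_minus_le (x y : V) : norm (minus x y) <= norm x + norm y.
Proof. unfold minus. eapply Rle_trans; [apply norm_triangle|]. rewrite norm_opp. lra. Qed.

Lemma norm_ge_minus (x y : V) : norm x - norm y <= norm (minus x y).
Proof.
  assert (E : plus (minus x y) y = x).
  { unfold minus. rewrite <- plus_assoc, plus_opp_l, plus_zero_r. reflexivity. }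
  assert (H : norm x <= norm (minus x y) + norm y) by (rewrite <- E at 1; apply norm_triangle).
  lra.
Qed.

Lemma norm_minus_self (x : V) : norm (minus x x) = 0.
Proof. rewrite (minus_eq_zero x). exact (@norm_zero R_AbsRing V). Qed.

Lemma norm_minus_zero_r (x : V) : norm (minus x zero) = norm x.
Proof. rewrite (minus_zero_r x). reflexivity. Qed.

Lemma minusN_plus_plus (a b c d : V) : minus (plus a b) (plus c d) = plus (minus a c) (minus b d).
Proof. exact (minus_plus_plus a b c d). Qed.

Lemma norm_minus_opp (x y : V) : norm (minus (opp x) (opp y)) = norm (minus x y).
Proof. rewrite (minus_opp_opp x y). exact (norm_opp _). Qed.

Lemma filterlim_norm {T} {F : (T -> Prop) -> Prop} {FF : Filter F} (f : T -> V) y :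
  (forall eps : posreal, F (fun x => norm (minus (f x) y) < eps)) -> filterlim f F (locally y).
Proof.
  intros H. apply filterlim_locally. intros eps.
  generalize (H eps). apply filter_imp. intros x Hx. apply norm_compat1. exact Hx.
Qed.

Lemma filterlim_norm_inv {T} {F : (T -> Prop) -> Prop} {FF : Filter F} (f : T -> V) y :
  filterlim f F (locally y) -> (forall eps : R, 0 < eps -> F (fun x => norm (minus (f x) y) < eps)).
Proof.
  intros H eps Heps.
  assert (Hnf := norm_factor_gt_0 (K:=R_AbsRing) (V:=V)).
  assert (He : 0 < eps / (@norm_factor R_AbsRing V)) by (apply Rdiv_lt_0_compat; lra).
  generalize (proj1 (filterlim_locally f y) H (mkposreal _ He)).
  apply filter_imp. intros x Hx. apply norm_compat2 in Hx. simpl in Hx.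
  replace ((@norm_factor R_AbsRing V) * (eps / (@norm_factor R_AbsRing V))) with eps in Hx by (field; lra). exact Hx.
Qed.

Lemma cont_of_eps (f : R -> V) x :
  (forall eps, 0 < eps -> exists d, 0 < d /\ forall y, Rabs (y - x) < d -> norm (minus (f y) (f x)) < eps) ->
  continuous f x.
Proof.
  intros H. apply filterlim_norm. intros eps. destruct (H eps (cond_pos eps)) as [d [Hd Hy]].
  exists (mkposreal d Hd). intros y Hy'. apply Hy. exact Hy'.
Qed.

Lemma eps_of_cont (f : R -> V) x : continuous f x ->
  (forall eps, 0 < eps -> exists d, 0 < d /\ forall y, Rabs (y - x) < d -> norm (minus (f y) (f x)) < eps).
Proof.
  intros H eps Heps. destruct (filterlim_norm_inv f (f x) H eps Heps) as [d Hd].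
  exists d. split; [apply cond_pos|]. intros y Hy. apply Hd. exact Hy.
Qed.

End Generic.

Section Linear.
Context {U W : NormedModule R_AbsRing}.

Lemma lin_zero (h : U -> W) : linear_map h -> h zero = zero.
Proof.
  intros [_ Hs]. transitivity (h (scal 0 (zero : U))).
  - f_equal. symmetry. exact (scal_zero_l (zero : U)).
  - rewrite Hs. exact (scal_zero_l (h zero)).
Qed.

Lemma lin_opp (h : U -> W) x : linear_map h -> h (opp x) = opp (h x).
Proof.
  intros [Hp Hs]. transitivity (h (scal (opp (one : R_AbsRing)) x)).
  - f_equal. symmetry. exact (scal_opp_one x).
  - rewrite Hs. exact (scal_opp_one (h x)).
Qed.

Lemma lin_minus (h : U -> W) x y : linear_map h -> h (minus x y) = minus (h x) (h y).
Proof.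
  intros Hl. unfold minus. rewrite (proj1 Hl), lin_opp by exact Hl. reflexivity.
Qed.

Lemma Riemann_sum_lin (h : U -> W) (f : R -> U) ptd : linear_map h ->
  Riemann_sum (fun x => h (f x)) ptd = h (Riemann_sum f ptd).
Proof.
  intros Hl. destruct ptd as [x0 l]. unfold Riemann_sum. simpl.
  generalize (x0, (zero : R)) as p.
  induction l as [|y l IH]; intros p; simpl.
  - symmetry. apply lin_zero, Hl.
  - rewrite IH. rewrite (proj1 Hl), (proj2 Hl). reflexivity.
Qed.

Lemma blin_cont (h : U -> W) l : bounded_linear_map h -> filterlim h (locally l) (locally (h l)).
Proof.
  intros [Hl [C HC]].
  apply filterlim_norm. intros eps.
  set (C' := Rmax C 1).
  assert (HC' : 0 < C') by (unfold C'; generalize (Rmax_r C 1); lra).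
  assert (He : 0 < eps / C') by (apply Rdiv_lt_0_compat; [apply cond_pos|lra]).
  generalize (filterlim_norm_inv (fun x => x) l (filterlim_id _ _) _ He).
  apply filter_imp. intros x Hx. rewrite <- lin_minus by exact Hl.
  eapply Rle_lt_trans; [apply HC|].
  apply Rle_lt_trans with (C' * norm (minus x l)).
  - apply Rmult_le_compat_r; [apply norm_ge_0|apply Rmax_l].
  - apply (Rmult_lt_compat_l C') in Hx; [|lra].
    replace (C' * (eps / C')) with (pos eps) in Hx by (field; lra). exact Hx.
Qed.

Lemma is_RInt_lin (h : U -> W) (f : R -> U) a b l :
  bounded_linear_map h -> is_RInt f a b l -> is_RInt (fun x => h (f x)) a b (h l).
Proof.
  intros Hb Hf. unfold is_RInt in *.
  apply (filterlim_ext (fun ptd => h (scal (sign (b-a)) (Riemann_sum f ptd)))).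
  { intros ptd. rewrite (proj2 (proj1 Hb)). rewrite Riemann_sum_lin by exact (proj1 Hb). reflexivity. }
  eapply filterlim_comp; [exact Hf|]. apply blin_cont, Hb.
Qed.

End Linear.

Section Limits.
Context {V : NormedModule R_AbsRing}.

Definition lim0 (g : R -> V) (l : V) : Prop :=
  forall eta, 0 < eta -> exists d, 0 < d /\ forall e, 0 < e < d -> norm (minus (g e) l) <= eta.

Lemma minus_zero_eq (x y : V) : minus x y = zero -> x = y.
Proof.
  intros H.
  assert (E: plus (minus x y) y = x) by (unfold minus; rewrite <- plus_assoc, plus_opp_l, plus_zero_r; reflexivity).
  rewrite <- E, H. apply plus_zero_l.
Qed.

Lemma norm_small_eq (x y : V) : (forall eta, 0 < eta -> norm (minus x y) <= eta) -> x = y.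
Proof.
  intros H. apply minus_zero_eq, norm_eq_zero.
  apply Rle_antisym; [|apply norm_ge_0].
  apply Rnot_lt_le. intros Hlt. assert (Hh : 0 < norm (minus x y) / 2) by lra. specialize (H _ Hh). lra.
Qed.

Lemma lim0_le (g : R -> V) l y c :
  lim0 g l -> (exists d, 0 < d /\ forall e, 0 < e < d -> norm (minus (g e) y) <= c) ->
  norm (minus l y) <= c.
Proof.
  intros Hl [d [Hd Hc]].
  apply Rnot_lt_le. intros Hlt.
  destruct (Hl ((norm (minus l y) - c) / 2)) as [d' [Hd' H']]; [lra|].
  set (e := Rmin d d' / 2).
  assert (He : 0 < e < d /\ 0 < e < d').
  { unfold e. generalize (Rmin_l d d') (Rmin_r d d'). intros. 
    assert (0 < Rmin d d') by (apply Rmin_pos; lra). lra. }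
  specialize (H' e (proj2 He)). specialize (Hc e (proj1 He)).
  generalize (norm_triangle_minus l (g e) y). rewrite norm_minus_sym in H'. lra.
Qed.

Lemma lim0_unique (g : R -> V) l1 l2 : lim0 g l1 -> lim0 g l2 -> l1 = l2.
Proof.
  intros H1 H2. apply norm_small_eq. intros eta Heta.
  apply (lim0_le g l1 l2 eta H1).
  destruct (H2 eta Heta) as [d [Hd H]]. exists d. split; auto.
Qed.

Definition limseq (u : nat -> V) (l : V) : Prop :=
  forall eta, 0 < eta -> exists N, forall n, (N <= n)%nat -> norm (minus (u n) l) <= eta.

Lemma limseq_le (u : nat -> V) l y c :
  limseq u l -> (exists N, forall n, (N <= n)%nat -> norm (minus (u n) y) <= c) ->
  norm (minus l y) <= c.
Proof.
  intros Hl [N Hc].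
  apply Rnot_lt_le. intros Hlt.
  destruct (Hl ((norm (minus l y) - c) / 2)) as [N' H']; [lra|].
  specialize (H' (max N N') ltac:(lia)). specialize (Hc (max N N') ltac:(lia)).
  generalize (norm_triangle_minus l (u (max N N')) y). rewrite norm_minus_sym in H'. lra.
Qed.

Lemma limseq_unique (u : nat -> V) l1 l2 : limseq u l1 -> limseq u l2 -> l1 = l2.
Proof.
  intros H1 H2. apply norm_small_eq. intros eta Heta.
  apply (limseq_le u l1 l2 eta H1).
  destruct (H2 eta Heta) as [N H]. exists N. auto.
Qed.

End Limits.

Section CLimits.
Context {V : CompleteNormedModule R_AbsRing}.
Lemma lim0_exists (g : R -> V) :
  (forall eta, 0 < eta -> exists d, 0 < d /\ forall e e', 0 < e < d -> 0 < e' < d ->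
     norm (minus (g e) (g e')) <= eta) ->
  exists l, lim0 g l.
Proof.
  intros Hc.
  set (F := filtermap g (at_right 0)).
  assert (FF : ProperFilter F) by (apply filtermap_proper_filter, at_right_proper_filter).
  assert (HC : cauchy F).
  { intros eps. destruct (Hc (eps / 2)) as [d [Hd H]]. { generalize (cond_pos eps); lra. }
    exists (g (d / 2)). unfold F, filtermap. exists (mkposreal d Hd).
    intros y Hy Hy0. apply (@norm_compat1 R_AbsRing V).
    apply Rle_lt_trans with (eps / 2); [|generalize (cond_pos eps); lra].
    apply H; [|lra]. split; auto. change (Rabs (y - 0) < d) in Hy.
    rewrite Rminus_0_r, Rabs_right in Hy by lra. lra. }
  exists (lim F). intros eta Heta.
  assert (Hnf := @norm_factor_gt_0 R_AbsRing V).
  assert (He : 0 < eta / (@norm_factor R_AbsRing V)) by (apply Rdiv_lt_0_compat; lra).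
  destruct (complete_cauchy F FF HC (mkposreal _ He)) as [d Hd].
  exists d. split; [apply cond_pos|]. intros e [He0 He1].
  apply Rlt_le. 
  assert (Hb : ball (lim F) (mkposreal _ He) (g e)).
  { apply Hd; auto. change (Rabs (e - 0) < d).
    rewrite Rminus_0_r, Rabs_right by lra. lra. }
  apply (@norm_compat2 R_AbsRing V) in Hb. simpl in Hb.
  replace ((@norm_factor R_AbsRing V) * (eta / (@norm_factor R_AbsRing V))) with eta in Hb by (field; lra).
  exact Hb.
Qed.

Lemma limseq_exists (u : nat -> V) :
  (forall eta, 0 < eta -> exists N, forall n m, (N <= n)%nat -> (N <= m)%nat ->
     norm (minus (u n) (u m)) <= eta) ->
  exists l, limseq u l.
Proof.
  intros Hc.
  set (F := filtermap u eventually).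
  assert (FF : ProperFilter F) by (apply filtermap_proper_filter, eventually_filter).
  assert (HC : cauchy F).
  { intros eps. destruct (Hc (eps / 2)) as [N H]. { generalize (cond_pos eps); lra. }
    exists (u N). unfold F, filtermap. exists N.
    intros n Hn. apply (@norm_compat1 R_AbsRing V).
    apply Rle_lt_trans with (eps / 2); [|generalize (cond_pos eps); lra].
    apply H; lia. }
  exists (lim F). intros eta Heta.
  assert (Hnf := @norm_factor_gt_0 R_AbsRing V).
  assert (He : 0 < eta / (@norm_factor R_AbsRing V)) by (apply Rdiv_lt_0_compat; lra).
  destruct (complete_cauchy F FF HC (mkposreal _ He)) as [N HN].
  exists N. intros n Hn. apply Rlt_le.
  assert (Hb := HN n Hn).
  apply (@norm_compat2 R_AbsRing V) in Hb. simpl in Hb.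
  replace ((@norm_factor R_AbsRing V) * (eta / (@norm_factor R_AbsRing V))) with eta in Hb by (field; lra).
  exact Hb.
Qed.

Definition Lim0 (g : R -> V) : V := epsilon (inhabits zero) (lim0 g).

Lemma Lim0_spec (g : R -> V) : (exists l, lim0 g l) -> lim0 g (Lim0 g).
Proof. intros H. unfold Lim0. apply epsilon_spec. exact H. Qed.

End CLimits.

Section Lim0More.
Context {V : NormedModule R_AbsRing}.

Lemma lim0_ext (g1 g2 : R -> V) l :
  (exists d, 0 < d /\ forall e, 0 < e < d -> g1 e = g2 e) -> lim0 g1 l -> lim0 g2 l.
Proof.
  intros [d [Hd Heq]] H eta Heta. destruct (H eta Heta) as [d' [Hd' H']].
  exists (Rmin d d'). split; [apply Rmin_pos; auto|]. intros e He.
  generalize (Rmin_l d d') (Rmin_r d d'); intros.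
  rewrite <- Heq by lra. apply H'. lra.
Qed.

Lemma lim0_const (x : V) : lim0 (fun _ => x) x.
Proof.
  intros eta Heta. exists 1. split; [lra|]. intros e He. rewrite norm_minus_self. lra.
Qed.

Lemma lim0_plus (g1 g2 : R -> V) l1 l2 :
  lim0 g1 l1 -> lim0 g2 l2 -> lim0 (fun e => plus (g1 e) (g2 e)) (plus l1 l2).
Proof.
  intros H1 H2 eta Heta.
  destruct (H1 (eta/2)) as [d1 [Hd1 H1']]; [lra|].
  destruct (H2 (eta/2)) as [d2 [Hd2 H2']]; [lra|].
  exists (Rmin d1 d2). split; [apply Rmin_pos; auto|]. intros e He.
  generalize (Rmin_l d1 d2) (Rmin_r d1 d2); intros.
  rewrite minusN_plus_plus. eapply Rle_trans; [apply norm_triangle|].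
  specialize (H1' e ltac:(lra)). specialize (H2' e ltac:(lra)). lra.
Qed.

Lemma lim0_opp (g : R -> V) l : lim0 g l -> lim0 (fun e => opp (g e)) (opp l).
Proof.
  intros H eta Heta. destruct (H eta Heta) as [d [Hd H']]. exists d. split; auto.
  intros e He. rewrite norm_minus_opp. apply H'. exact He.
Qed.

Lemma lim0_minus (g1 g2 : R -> V) l1 l2 :
  lim0 g1 l1 -> lim0 g2 l2 -> lim0 (fun e => minus (g1 e) (g2 e)) (minus l1 l2).
Proof. intros H1 H2. apply lim0_plus; auto. apply lim0_opp; auto. Qed.

Lemma lim0_norm_le (g : R -> V) l c :
  lim0 g l -> (exists d, 0 < d /\ forall e, 0 < e < d -> norm (g e) <= c) -> norm l <= c.
Proof.
  intros H [d [Hd Hc]]. rewrite <- norm_minus_zero_r. apply (lim0_le g l zero c H).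
  exists d. split; auto. intros e He. rewrite norm_minus_zero_r. auto.
Qed.

End Lim0More.

Lemma lim0_blin {U W : NormedModule R_AbsRing} (h : U -> W) (g : R -> U) l :
  bounded_linear_map h -> lim0 g l -> lim0 (fun e => h (g e)) (h l).
Proof.
  intros [Hl [C HC]] H eta Heta.
  set (C' := Rmax C 1).
  assert (HC' : 0 < C') by (unfold C'; generalize (Rmax_r C 1); lra).
  destruct (H (eta / C')) as [d [Hd H']]; [apply Rdiv_lt_0_compat; lra|].
  exists d. split; auto. intros e He. rewrite <- lin_minus by exact Hl.
  eapply Rle_trans; [apply HC|].
  apply Rle_trans with (C' * norm (minus (g e) l)).
  - apply Rmult_le_compat_r; [apply norm_ge_0|apply Rmax_l].
  - specialize (H' e He). apply (Rmult_le_compat_l C') in H'; [|lra].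
    replace (C' * (eta / C')) with eta in H' by (field; lra). exact H'.
Qed.

Lemma limseq_shift {V : NormedModule R_AbsRing} (u : nat -> V) l :
  limseq u l -> limseq (fun n => u (S n)) l.
Proof.
  intros H eta Heta. destruct (H eta Heta) as [N HN]. exists N. intros n Hn. apply HN. lia.
Qed.

Section CWrap.
Context {V : CompleteNormedModule R_AbsRing}.
Lemma normC_scal (a : R) (x : V) : norm (scal a x) = Rabs a * norm x.
Proof. exact (norm_scal_R a x). Qed.
Lemma normC_minus_sym (x y : V) : norm (minus x y) = norm (minus y x).
Proof. exact (norm_minus_sym x y). Qed.
Lemma normC_triangle_minus (x y z : V) :
  norm (minus x z) <= norm (minus x y) + norm (minus y z).
Proof. exact (norm_triangle_minus x y z). Qed.
Lemma normC_minus_le (x y : V) : norm (minus x y) <= norm x + norm y.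
Proof. exact (norm_minus_le x y). Qed.
Lemma normC_ge_minus (x y : V) : norm x - norm y <= norm (minus x y).
Proof. exact (norm_ge_minus x y). Qed.
Lemma normC_triangle (x y : V) : norm (plus x y) <= norm x + norm y.
Proof. exact (norm_triangle x y). Qed.
Lemma normC_opp (x : V) : norm (opp x) = norm x.
Proof. exact (norm_opp x). Qed.
Lemma normC_zero : norm (zero : V) = 0.
Proof. exact (@norm_zero R_AbsRing V). Qed.
Lemma normC_ge0 (x : V) : 0 <= norm x.
Proof. exact (norm_ge_0 x). Qed.
Lemma normC_eq_zero (x : V) : norm x = 0 -> x = zero.
Proof. exact (norm_eq_zero x). Qed.
Lemma minusC_eq_zero (x : V) : minus x x = zero.
Proof. exact (minus_eq_zero x). Qed.
Lemma minusC_plus_l (s y : V) : minus (plus s y) s = y.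
Proof. exact (minus_plus_l s y). Qed.
Lemma minusC_zero_r (x : V) : minus x zero = x.
Proof. exact (minus_zero_r x). Qed.
Lemma minusC_zero_eq (x y : V) : minus x y = zero -> x = y.
Proof. exact (minus_zero_eq x y). Qed.
Lemma normC_small_eq (x y : V) : (forall eta, 0 < eta -> norm (minus x y) <= eta) -> x = y.
Proof. exact (norm_small_eq x y). Qed.
Lemma minusC_plus_plus (a b c d : V) : minus (plus a b) (plus c d) = plus (minus a c) (minus b d).
Proof. exact (minus_plus_plus a b c d). Qed.
Lemma normC_minus_self (x : V) : norm (minus x x) = 0.
Proof. rewrite (minus_eq_zero x). exact (@norm_zero R_AbsRing V). Qed.
End CWrap.

Section CLin.
Context {U W : CompleteNormedModule R_AbsRing}.
Lemma linC_zero (h : U -> W) : linear_map h -> h zero = zero.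
Proof. exact (lin_zero h). Qed.
Lemma linC_opp (h : U -> W) x : linear_map h -> h (opp x) = opp (h x).
Proof. exact (lin_opp h x). Qed.
Lemma linC_minus (h : U -> W) x y : linear_map h -> h (minus x y) = minus (h x) (h y).
Proof. exact (lin_minus h x y). Qed.
Lemma linC_plus (h : U -> W) x y : linear_map h -> h (plus x y) = plus (h x) (h y).
Proof. intros H. exact (proj1 H x y). Qed.
Lemma linC_scal (h : U -> W) a x : linear_map h -> h (scal a x) = scal a (h x).
Proof. intros H. exact (proj2 H a x). Qed.
End CLin.

Section CWrap2.
Context {V : CompleteNormedModule R_AbsRing}.

Lemma lim0C_le (g : R -> V) l y c :
  lim0 g l -> (exists d, 0 < d /\ forall e, 0 < e < d -> norm (minus (g e) y) <= c) ->
  norm (minus l y) <= c.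
Proof. exact (lim0_le g l y c). Qed.

Lemma lim0C_norm_le (g : R -> V) l c :
  lim0 g l -> (exists d, 0 < d /\ forall e, 0 < e < d -> norm (g e) <= c) -> norm l <= c.
Proof. exact (lim0_norm_le g l c). Qed.

Lemma lim0C_exists (g : R -> V) :
  (forall eta, 0 < eta -> exists d, 0 < d /\ forall e e', 0 < e < d -> 0 < e' < d ->
     norm (minus (g e) (g e')) <= eta) ->
  exists l, lim0 g l.
Proof. exact (lim0_exists g). Qed.

Lemma limseqC_exists (u : nat -> V) :
  (forall eta, 0 < eta -> exists N, forall n m, (N <= n)%nat -> (N <= m)%nat ->
     norm (minus (u n) (u m)) <= eta) ->
  exists l, limseq u l.
Proof. exact (limseq_exists u). Qed.

Lemma limseqC_le (u : nat -> V) l y c :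
  limseq u l -> (exists N, forall n, (N <= n)%nat -> norm (minus (u n) y) <= c) ->
  norm (minus l y) <= c.
Proof. exact (limseq_le u l y c). Qed.

Lemma contC_of_eps (f : R -> V) x :
  (forall eps, 0 < eps -> exists d, 0 < d /\ forall y, Rabs (y - x) < d -> norm (minus (f y) (f x)) < eps) ->
  continuous f x.
Proof. exact (cont_of_eps f x). Qed.

Lemma epsC_of_cont (f : R -> V) x : continuous f x ->
  (forall eps, 0 < eps -> exists d, 0 < d /\ forall y, Rabs (y - x) < d -> norm (minus (f y) (f x)) < eps).
Proof. exact (eps_of_cont f x). Qed.

Lemma RIntC_diff (f : R -> V) b x y : ex_RInt f b x -> ex_RInt f x y ->
  minus (RInt f b y) (RInt f b x) = RInt f x y.
Proof.
  intros H1 H2. rewrite <- (RInt_Chasles f b x y H1 H2). apply minusC_plus_l.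
Qed.

Lemma normC_minus_plus_r (x y z : V) : norm (minus (plus x y) (plus x z)) = norm (minus y z).
Proof.
  rewrite minusC_plus_plus, minusC_eq_zero. f_equal. exact (plus_zero_l _).
Qed.

End CWrap2.

Section CWrap3.
Context {V : CompleteNormedModule R_AbsRing}.
Lemma lim0C_intro (g : R -> V) l :
  (forall eta, 0 < eta -> exists d, 0 < d /\ forall e, 0 < e < d -> norm (minus (g e) l) <= eta) -> lim0 g l.
Proof. intros H. exact H. Qed.

Lemma normC_RInt_point (f : R -> V) a : norm (RInt f a a) = 0.
Proof. rewrite RInt_point. exact (@norm_zero R_AbsRing V). Qed.

Lemma RInt_upper_lim (f : R -> V) a b : a < b -> (forall z, a <= z <= b -> continuous f z) ->
  lim0 (fun e => RInt f a (Rmax a (b - e))) (RInt f a b).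
Proof.
  intros Hab Hf. apply lim0C_intro. intros eta Heta.
  destruct (epsC_of_cont f b (Hf b ltac:(lra)) 1 Rlt_0_1) as [d1 [Hd1 H1]].
  set (M := norm (f b) + 1).
  assert (HM : 0 < M) by (unfold M; generalize (normC_ge0 (f b)); lra).
  exists (Rmin (Rmin d1 (b - a)) (eta / M)). split.
  { apply Rmin_pos; [apply Rmin_pos; lra|apply Rdiv_lt_0_compat; lra]. }
  intros e He.
  generalize (Rmin_l (Rmin d1 (b - a)) (eta / M)) (Rmin_r (Rmin d1 (b - a)) (eta / M)) (Rmin_l d1 (b - a)) (Rmin_r d1 (b - a)). intros.
  rewrite Rmax_right by lra.
  assert (E1 : ex_RInt f a (b - e)).
  { apply ex_RInt_continuous. intros z Hz. rewrite Rmin_left, Rmax_right in Hz by lra. apply Hf. lra. }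
  assert (E2 : ex_RInt f (b - e) b).
  { apply ex_RInt_continuous. intros z Hz. rewrite Rmin_left, Rmax_right in Hz by lra. apply Hf. lra. }
  rewrite normC_minus_sym, RIntC_diff by assumption.
  apply Rle_trans with (e * M).
  - apply (norm_RInt_le f (fun _ => M) (b - e) b _ (e * M)); [lra| |apply RInt_correct, E2|].
    + intros x Hx. assert (Hx' : norm (minus (f x) (f b)) < 1) by (apply H1; apply Rabs_def1; lra).
      generalize (normC_ge_minus (f x) (f b)). unfold M. lra.
    + replace (e * M) with (scal (b - (b - e)) M) by (change ((b - (b - e)) * M = e * M); ring).
      exact (is_RInt_const (V:=R_NormedModule) (b - e) b M).
  - apply Rle_trans with ((eta / M) * M); [apply Rmult_le_compat_r; lra|]. right. field. lra.
Qed.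
Lemma lim0C_ext (g1 g2 : R -> V) l :
  (exists d, 0 < d /\ forall e, 0 < e < d -> g1 e = g2 e) -> lim0 g1 l -> lim0 g2 l.
Proof. exact (lim0_ext g1 g2 l). Qed.
Lemma lim0C_const (x : V) : lim0 (fun _ => x) x.
Proof. exact (lim0_const x). Qed.
Lemma lim0C_plus (g1 g2 : R -> V) l1 l2 :
  lim0 g1 l1 -> lim0 g2 l2 -> lim0 (fun e => plus (g1 e) (g2 e)) (plus l1 l2).
Proof. exact (lim0_plus g1 g2 l1 l2). Qed.
Lemma lim0C_minus (g1 g2 : R -> V) l1 l2 :
  lim0 g1 l1 -> lim0 g2 l2 -> lim0 (fun e => minus (g1 e) (g2 e)) (minus l1 l2).
Proof. exact (lim0_minus g1 g2 l1 l2). Qed.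
Lemma lim0C_unique (g : R -> V) l1 l2 : lim0 g l1 -> lim0 g l2 -> l1 = l2.
Proof. exact (lim0_unique g l1 l2). Qed.
Lemma limseqC_unique (u : nat -> V) l1 l2 : limseq u l1 -> limseq u l2 -> l1 = l2.
Proof. exact (limseq_unique u l1 l2). Qed.
End CWrap3.

Lemma lim0C_blin {U W : CompleteNormedModule R_AbsRing} (h : U -> W) (g : R -> U) l :
  bounded_linear_map h -> lim0 g l -> lim0 (fun e => h (g e)) (h l).
Proof. exact (lim0_blin h g l). Qed.


Lemma pow2_inv_small eta : 0 < eta -> exists N, forall n, (N <= n)%nat -> / 2 ^ n <= eta.
Proof.
  intros He. destruct (archimed_cor1 eta He) as [N [HN HN0]].
  exists N. intros n Hn.
  assert (Hn2 : INR n <= 2 ^ n).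
  { clear. induction n. simpl; lra. rewrite S_INR. simpl.
    assert (1 <= 2 ^ n) by (apply pow_R1_Rle; lra). lra. }
  assert (HNn : INR N <= INR n) by (apply le_INR; exact Hn).
  assert (0 < INR N) by (apply lt_0_INR; exact HN0).
  apply Rle_trans with (/ INR N); [|lra].
  apply Rinv_le_contravar; lra.
Qed.

Section UBP.
Context (Fm : CompleteNormedModule R_AbsRing) (Sg : R -> Fm -> Fm).
Hypothesis HSb : forall t, 0 <= t -> bounded_linear_map (Sg t).
Hypothesis HS0 : forall x, Sg 0 x = x.
Hypothesis HSc : forall x, forall eps, 0 < eps -> exists delta, 0 < delta /\
      forall s, 0 <= s -> Rabs (s - 0) < delta -> norm (minus (Sg s x) (Sg 0 x)) < eps.

Lemma ubp_pointwise x : exists d, 0 < d /\ forall r, 0 <= r <= d -> norm (Sg r x) <= norm x + 1.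
Proof.
  destruct (HSc x 1 Rlt_0_1) as [d [Hd H]]. exists (d/2). split; [lra|].
  intros r Hr. specialize (H r (proj1 Hr)). rewrite Rminus_0_r, Rabs_right in H by lra.
  rewrite HS0 in H. specialize (H ltac:(lra)).
  assert (norm (Sg r x) - norm x <= norm (minus (Sg r x) x)) by exact (normC_ge_minus _ _). lra.
Qed.

Lemma ubp : exists M d, 0 < d /\ 0 <= M /\ forall r x, 0 <= r <= d -> norm (Sg r x) <= M * norm x.
Proof.
  apply NNPP. intros Hn.
  assert (Hstep : forall b eps d, 0 < eps -> 0 < d -> exists p : R * Fm,
             0 <= fst p <= d /\ norm (snd p) <= eps /\ b <= norm (Sg (fst p) (snd p))).
  { intros b eps d He Hd.
    set (M := Rmax 0 b / eps).
    assert (HM : 0 <= M) by (unfold M; apply Rdiv_le_0_compat; [apply Rmax_l|lra]).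
    apply NNPP. intros Hne. apply Hn. exists M, d. split; [exact Hd|]. split; [exact HM|].
    intros r x Hr. apply Rnot_lt_le. intros Hlt.
    assert (Hx : 0 < norm x).
    { destruct (Rle_lt_or_eq_dec 0 (norm x) (normC_ge0 x)) as [H|H]; [exact H|].
      exfalso. symmetry in H. apply normC_eq_zero in H. rewrite H in Hlt.
      rewrite (linC_zero (Sg r) (proj1 (HSb r (proj1 Hr)))) in Hlt. rewrite normC_zero in Hlt. lra. }
    apply Hne. exists (r, scal (eps / norm x) x). simpl. split; [exact Hr|].
    rewrite !normC_scal. rewrite (linC_scal (Sg r)) by exact (proj1 (HSb r (proj1 Hr))). rewrite normC_scal.
    rewrite Rabs_right by (apply Rle_ge, Rdiv_le_0_compat; lra).
    split.
    - right. field. lra.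
    - apply Rle_trans with (Rmax 0 b); [apply Rmax_r|].
      apply Rlt_le. replace (Rmax 0 b) with (eps / norm x * (M * norm x)) by (unfold M; field; lra).
      apply Rmult_lt_compat_l; [apply Rdiv_lt_0_compat|]; lra. }
  assert (Hstep' : forall (q : R * R * R), exists p : R * Fm, 0 < snd (fst q) -> 0 < snd q ->
             0 <= fst p <= snd q /\ norm (snd p) <= snd (fst q) /\ fst (fst q) <= norm (Sg (fst p) (snd p))).
  { intros [[b eps] d]. simpl. destruct (Rlt_dec 0 eps) as [He|He]; [destruct (Rlt_dec 0 d) as [Hd|Hd]|].
    - destruct (Hstep b eps d He Hd) as [p Hp]. exists p. auto.
    - exists (0, zero). intros; lra.
    - exists (0, zero). intros; lra. }
  set (step := fun q => proj1_sig (constructive_indefinite_description _ (Hstep' q))).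
  assert (Hstep_spec : forall q, 0 < snd (fst q) -> 0 < snd q ->
    0 <= fst (step q) <= snd q /\ norm (snd (step q)) <= snd (fst q) /\ fst (fst q) <= norm (Sg (fst (step q)) (snd (step q)))).
  { intros q. unfold step. destruct (constructive_indefinite_description _ (Hstep' q)) as [p Hp]. exact Hp. }
  assert (Hpw : forall x : Fm, exists d, 0 < d /\ forall r, 0 <= r <= d -> norm (Sg r x) <= norm x + 1)
    by exact ubp_pointwise.
  set (bnd := fun x => proj1_sig (constructive_indefinite_description _ (Hpw x))).
  assert (Hbnd : forall x, 0 < bnd x /\ forall r, 0 <= r <= bnd x -> norm (Sg r x) <= norm x + 1).
  { intros x. unfold bnd. destruct (constructive_indefinite_description _ (Hpw x)) as [d Hd]. exact Hd. }
  assert (HC : forall r : R, exists C, 1 <= C /\ (0 <= r -> forall x, norm (Sg r x) <= C * norm x)).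
  { intros r. destruct (Rle_dec 0 r) as [Hr|Hr].
    - destruct (HSb r Hr) as [_ [C HC]]. exists (Rmax C 1). split; [apply Rmax_r|]. intros _ x.
      eapply Rle_trans; [apply HC|]. apply Rmult_le_compat_r; [apply normC_ge0|apply Rmax_l].
    - exists 1. split; [lra|]. intros; lra. }
  set (Cb := fun r => proj1_sig (constructive_indefinite_description _ (HC r))).
  assert (HCb : forall r, 1 <= Cb r /\ (0 <= r -> forall x, norm (Sg r x) <= Cb r * norm x)).
  { intros r. unfold Cb. destruct (constructive_indefinite_description _ (HC r)) as [C H]. exact H. }
  set (q_of := fun (k : nat) (st : Fm * R) =>
                 (norm (fst st) + INR k + 3, snd st, Rmin (/ (INR k + 1)) (bnd (fst st)))).
  set (nxt := fun (k : nat) (st : Fm * R) =>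
                 let p := step (q_of k st) in
                 (plus (fst st) (snd p), Rmin (snd st / 2) (/ (2 * Cb (fst p))))).
  set (st := fix st (n : nat) : Fm * R := match n with O => (zero, 1) | S k => nxt k (st k) end).
  assert (Hst0 : st O = (zero, 1)) by reflexivity.
  assert (HstS : forall k, st (S k) = nxt k (st k)) by reflexivity.
  assert (Hepos : forall n, 0 < snd (st n)).
  { induction n. rewrite Hst0; simpl; lra.
    rewrite HstS. unfold nxt. simpl. apply Rmin_pos; [lra|].
    apply Rinv_0_lt_compat. generalize (proj1 (HCb (fst (step (q_of n (st n)))))); lra. }
  assert (Hqpos : forall k, 0 < snd (fst (q_of k (st k))) /\ 0 < snd (q_of k (st k))).
  { intros k. unfold q_of. simpl. split; [apply Hepos|]. apply Rmin_pos.
    apply Rinv_0_lt_compat. generalize (pos_INR k); lra. apply Hbnd. }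
  assert (Hspec : forall k, let p := step (q_of k (st k)) in
      0 <= fst p <= Rmin (/ (INR k + 1)) (bnd (fst (st k))) /\ norm (snd p) <= snd (st k) /\
      norm (fst (st k)) + INR k + 3 <= norm (Sg (fst p) (snd p))).
  { intros k. apply (Hstep_spec (q_of k (st k))); apply Hqpos. }
  assert (Hehalf : forall n, snd (st (S n)) <= snd (st n) / 2).
  { intros n. rewrite HstS. unfold nxt. simpl. apply Rmin_l. }
  assert (Hepow : forall n, snd (st n) <= / 2 ^ n).
  { induction n. rewrite Hst0; simpl; lra.
    eapply Rle_trans; [apply Hehalf|]. simpl. rewrite Rinv_mult. lra. }
  assert (Hcau : forall n m, (n <= m)%nat -> norm (minus (fst (st m)) (fst (st n))) <= 2 * snd (st n) - 2 * snd (st m)).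
  { intros n m Hnm. induction Hnm.
    - rewrite normC_minus_self. lra.
    - rewrite HstS. unfold nxt. simpl fst.
      eapply Rle_trans; [apply (normC_triangle_minus _ (fst (st m)))|].
      rewrite minusC_plus_l. generalize (proj1 (proj2 (Hspec m))) (Hehalf m). simpl. lra. }
  destruct (limseq_exists (fun n => fst (st n))) as [x Hx].
  { intros eta Heta. destruct (pow2_inv_small (eta / 2)) as [N HN]; [lra|].
    exists N. intros n m Hn1 Hm1.
    destruct (Nat.le_ge_cases n m) as [H|H].
    - rewrite normC_minus_sym. eapply Rle_trans; [apply Hcau, H|].
      generalize (HN n Hn1) (Hepow n) (Hepos m). lra.
    - eapply Rle_trans; [apply Hcau, H|].
      generalize (HN m Hm1) (Hepow m) (Hepos n). lra. }
  assert (Htail : forall n, norm (minus x (fst (st n))) <= 2 * snd (st n)).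
  { intros n. apply (limseq_le _ x _ _ Hx). exists n. intros m Hm.
    eapply Rle_trans; [apply Hcau, Hm|]. generalize (Hepos m); lra. }
  destruct (Hbnd x) as [Hdx0 Hdx]. set (dx := bnd x) in *.
  destruct (archimed (Rmax (/ dx) (norm x + 1))) as [Hk _].
  assert (Hk0 : (0 <= up (Rmax (/ dx) (norm x + 1)))%Z).
  { apply le_IZR. generalize (Rmax_r (/dx) (norm x + 1)) (normC_ge0 x). lra. }
  set (k := Z.to_nat (up (Rmax (/ dx) (norm x + 1)))).
  assert (Hkr : Rmax (/ dx) (norm x + 1) < INR k).
  { unfold k. rewrite INR_IZR_INZ, Z2Nat.id by exact Hk0. exact Hk. }
  destruct (Hspec k) as [Hr [Hy Hbig]].
  set (p := step (q_of k (st k))) in *.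
  set (r := fst p) in *. set (y := snd p) in *.
  assert (Hr0 : 0 <= r) by lra.
  assert (Hrdx : r <= dx).
  { apply Rle_trans with (/ (INR k + 1)); [eapply Rle_trans; [apply Hr|apply Rmin_l]|].
    generalize (Rmax_l (/dx) (norm x + 1)); intros.
    rewrite <- (Rinv_inv dx). apply Rinv_le_contravar.
    apply Rinv_0_lt_compat; lra. lra. }
  assert (Hr_s : r <= bnd (fst (st k))) by (eapply Rle_trans; [apply Hr|apply Rmin_r]).
  assert (H1 : norm (Sg r x) <= norm x + 1) by (apply Hdx; lra).
  assert (H2 : norm (Sg r (fst (st k))) <= norm (fst (st k)) + 1) by (apply Hbnd; lra).
  assert (Hsk1 : fst (st (S k)) = plus (fst (st k)) y) by (rewrite HstS; reflexivity).
  assert (Hek1 : snd (st (S k)) <= / (2 * Cb r)) by (rewrite HstS; unfold nxt; simpl; apply Rmin_r).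
  destruct (HCb r) as [HC1 HC2].
  assert (H3 : norm (Sg r (minus x (fst (st (S k))))) <= 1).
  { eapply Rle_trans; [apply HC2, Hr0|].
    apply Rle_trans with (Cb r * (2 * / (2 * Cb r))).
    apply Rmult_le_compat_l; [lra|]. generalize (Htail (S k)). lra.
    right. field. lra. }
  assert (Hlin := proj1 (HSb r Hr0)).
  rewrite (linC_minus (Sg r)) in H3 by exact Hlin.
  assert (H4 : norm (Sg r y) <= norm (Sg r (fst (st (S k)))) + norm (Sg r (fst (st k)))).
  { replace y with (minus (fst (st (S k))) (fst (st k))) by (rewrite Hsk1; apply minusC_plus_l).
    rewrite (linC_minus (Sg r)) by exact Hlin. apply normC_minus_le. }
  assert (H5 : norm (Sg r (fst (st (S k)))) <= norm (Sg r x) + 1).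
  { generalize (normC_ge_minus (Sg r x) (Sg r (fst (st (S k))))). 
    rewrite normC_minus_sym in H3. generalize (normC_triangle_minus (Sg r (fst (st (S k)))) (Sg r x) zero).
    intros _. 
    generalize (normC_ge_minus (Sg r (fst (st (S k)))) (Sg r x)). lra. }
  generalize (Rmax_r (/dx) (norm x + 1)). lra.
Qed.

End UBP.

Section Main.
Variables (Fp F Fm : CompleteNormedModule R_AbsRing)
  (iP : Fp -> F) (iF : F -> Fm)
  (A : Fp -> Fm)
  (S : R -> Fm -> Fm) (SF : R -> F -> F) (SmF : R -> Fm -> F)
  (B N K J sigma : R) (mu : R -> R)
  (Pq : F -> F -> Fm) (xi : R -> Fm) (f0 : F).
Hypothesis (HiF : dense_embedding iF).
Hypothesis (HS : generates_C0_semigroup (fun f => iF (iP f)) A S).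
Hypothesis (HSF : forall t f, 0 <= t -> iF (SF t f) = S t (iF f)).
Hypothesis  (HSFc : jointly_continuous_on (fun t => 0 <= t) SF).
Hypothesis  (HSmF : forall t f, 0 < t -> iF (SmF t f) = S t f).
Hypothesis  (HSmFc : jointly_continuous_on (fun t => 0 < t) SmF).
Hypothesis  (HB : 0 <= B) (HN : 0 < N).
Hypothesis  (HestF : forall t (f : F), 0 <= t -> norm (SF t f) <= exp (- B * t) * norm f).
Hypothesis  (HestFm : forall t (f : Fm), 0 < t -> norm (SmF t f) <= mu t * exp (- B * t) * norm f).
Hypothesis  (Hmu_cont : forall t, 0 < t -> continuity_pt mu t).
Hypothesis  (Hmu_pos : forall t, 0 < t -> 0 < mu t).
Hypothesis  (Hmu_int : forall t eps, 0 < eps < t ->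
      RInt (fun s => mu (t - s) * exp (- B * s)) 0 (t - eps) <= N).
Hypothesis  (HPbil : is_bilinear Pq) (HK : 0 < K).
Hypothesis  (HPbnd : forall f g, norm (Pq f g) <= K * norm f * norm g).
Hypothesis  (Hxi_lip : locally_lipschitz_nonneg xi) (HJ : 0 <= J).
Hypothesis  (Hxi_bnd : forall t, 0 <= t -> norm (xi t) <= J * exp (- 2 * B * t)).
Hypothesis  (Hsmall : 4 * K * N * (norm f0 + N * J) <= 1).

Lemma iF_blin : bounded_linear_map iF.
Proof. exact (proj1 HiF). Qed.
Lemma iF_inj x y : iF x = iF y -> x = y.
Proof. exact (proj1 (proj2 HiF) x y). Qed.
Lemma S_blin t : 0 <= t -> bounded_linear_map (S t).
Proof. exact (proj1 HS t). Qed.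
Lemma S_0 x : S 0 x = x.
Proof. exact (proj1 (proj2 HS) x). Qed.
Lemma S_semi t s x : 0 <= t -> 0 <= s -> S (t + s) x = S t (S s x).
Proof. exact (proj1 (proj2 (proj2 HS)) t s x). Qed.
Lemma S_cont x t : 0 <= t -> forall eps, 0 < eps -> exists delta, 0 < delta /\
      forall s, 0 <= s -> Rabs (s - t) < delta -> norm (minus (S s x) (S t x)) < eps.
Proof. exact (proj1 (proj2 (proj2 (proj2 HS))) x t). Qed.

Lemma SF_lin t : 0 <= t -> linear_map (SF t).
Proof.
  intros Ht. destruct (S_blin t Ht) as [[Hp Hs] _]. destruct iF_blin as [[Ip Is] _]. split.
  - intros x y. apply iF_inj. rewrite Ip, !HSF by exact Ht. rewrite Ip. apply Hp.
  - intros a x. apply iF_inj. rewrite Is, !HSF by exact Ht. rewrite Is. apply Hs.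
Qed.

Lemma SF_blin t : 0 <= t -> bounded_linear_map (SF t).
Proof.
  intros Ht. split; [apply SF_lin, Ht|]. exists (exp (- B * t)). intros x. apply HestF, Ht.
Qed.

Lemma SmF_lin t : 0 < t -> linear_map (SmF t).
Proof.
  intros Ht. destruct (S_blin t (Rlt_le _ _ Ht)) as [[Hp Hs] _]. destruct iF_blin as [[Ip Is] _]. split.
  - intros x y. apply iF_inj. rewrite Ip, !HSmF by exact Ht. apply Hp.
  - intros a x. apply iF_inj. rewrite Is, !HSmF by exact Ht. apply Hs.
Qed.

Lemma SF_0 x : SF 0 x = x.
Proof. apply iF_inj. rewrite HSF by lra. apply S_0. Qed.

Lemma SmF_semi t h w : 0 < t -> 0 <= h -> SmF (t + h) w = SF h (SmF t w).
Proof.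
  intros Ht Hh. apply iF_inj. rewrite HSmF by lra. rewrite HSF by exact Hh. rewrite HSmF by exact Ht.
  rewrite Rplus_comm. apply S_semi; lra.
Qed.

Lemma iF_bound : exists C, 0 < C /\ forall x, norm (iF x) <= C * norm x.
Proof.
  destruct iF_blin as [_ [C HC]]. exists (Rmax C 1). split.
  - generalize (Rmax_r C 1); lra.
  - intros x. eapply Rle_trans; [apply HC|]. apply Rmult_le_compat_r; [apply normC_ge0|apply Rmax_l].
Qed.

Lemma mu_cont z : 0 < z -> continuous mu z.
Proof. intros Hz. apply (proj1 (continuity_pt_filterlim mu z)), Hmu_cont, Hz. Qed.

Lemma mu_ex a b : 0 < a -> a <= b -> ex_RInt mu a b.
Proof.
  intros Ha Hab. apply (ex_RInt_continuous (V:=R_CompleteNormedModule)). intros z Hz. apply mu_cont.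
  rewrite Rmin_left in Hz by lra. lra.
Qed.

Lemma rev_mu t x y : 0 < t - y -> t - y <= t - x ->
  is_RInt (fun s => mu (t - s)) x y (RInt mu (t - y) (t - x)).
Proof.
  intros H1 H2.
  assert (I := RInt_correct mu (t - y) (t - x) (mu_ex _ _ H1 H2)).
  apply is_RInt_swap in I.
  assert (I2 : is_RInt mu (-1 * x + t) (-1 * y + t) (opp (RInt mu (t - y) (t - x)))).
  { replace (-1 * x + t) with (t - x) by ring. replace (-1 * y + t) with (t - y) by ring. exact I. }
  apply is_RInt_comp_lin in I2. apply (is_RInt_scal _ _ _ (-1)) in I2.
  assert (E : scal (-1) (opp (RInt mu (t-y) (t-x))) = RInt mu (t-y) (t-x)).
  { change (-1 * - RInt mu (t-y) (t-x) = RInt mu (t-y) (t-x)). ring. }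
  rewrite <- E.
  eapply is_RInt_ext; [|exact I2].
  intros s _. change (-1 * (-1 * mu (-1 * s + t)) = mu (t - s)).
  replace (-1 * s + t) with (t - s) by ring. ring.
Qed.

Lemma mu_G_bound a : 0 < a < 1 -> RInt mu a 1 <= N * exp B.
Proof.
  intros Ha. assert (Hi := Hmu_int 1 a Ha).
  assert (I1 := rev_mu 1 0 (1 - a) ltac:(lra) ltac:(lra)).
  replace (1 - (1 - a)) with a in I1 by ring. replace (1 - 0) with 1 in I1 by ring.
  assert (Hex1 : ex_RInt (fun s => mu (1 - s)) 0 (1 - a)) by (eexists; exact I1).
  assert (Hex2 : ex_RInt (fun s => mu (1 - s) * exp (- B * s)) 0 (1 - a)).
  { apply (ex_RInt_continuous (V:=R_CompleteNormedModule)). intros z Hz. rewrite Rmin_left, Rmax_right in Hz by lra.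
    apply (continuous_mult (fun s => mu (1 - s)) (fun s => exp (- B * s))).
    - apply (continuous_comp (fun s => 1 - s) mu). 
      + apply (continuous_minus (fun _ => 1) (fun s => s)). apply continuous_const. apply continuous_id.
      + apply mu_cont. lra.
    - apply continuous_exp_comp.
      apply (continuous_mult (fun _ => - B) (fun s => s)); [apply continuous_const|apply continuous_id]. }
  assert (Hle : RInt (fun s => exp (- B) * mu (1 - s)) 0 (1 - a) <= RInt (fun s => mu (1 - s) * exp (- B * s)) 0 (1 - a)).
  { apply RInt_le; [lra| |exact Hex2|].
    - apply (ex_RInt_scal (fun s => mu (1 - s)) 0 (1 - a) (exp (- B))). exact Hex1.
    - intros x Hx. rewrite Rmult_comm. apply Rmult_le_compat_l.
      + apply Rlt_le, Hmu_pos. lra.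
      + apply exp_le. nra. }
  assert (E : RInt (fun s => exp (- B) * mu (1 - s)) 0 (1 - a) = exp (- B) * RInt mu a 1).
  { rewrite <- (is_RInt_unique _ _ _ _ I1).
    exact (RInt_scal (fun s => mu (1 - s)) 0 (1 - a) (exp (- B)) Hex1). }
  rewrite E in Hle.
  assert (Hpos : 0 < exp (- B)) by apply exp_pos.
  assert (exp (- B) * exp B = 1) by (rewrite <- exp_plus; replace (- B + B) with 0 by ring; apply exp_0).
  assert (Hb : exp (- B) * RInt mu a 1 <= N) by lra.
  assert (0 < exp B) by apply exp_pos. nra.
Qed.

Lemma mu_small eta : 0 < eta -> exists d, 0 < d < 1 /\ forall a b, 0 < a -> a <= b -> b <= d -> RInt mu a b <= eta.
Proof.
  intros Heta.
  set (E := fun x => exists a, 0 < a < 1 /\ x = RInt mu a 1).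
  assert (HEb : bound E).
  { exists (N * exp B). intros x [a [Ha ->]]. apply mu_G_bound, Ha. }
  assert (HEn : exists x, E x) by (exists (RInt mu (1/2) 1); exists (1/2); split; [lra|reflexivity]).
  destruct (completeness E HEb HEn) as [m [Hub Hlub]].
  assert (Hnot : ~ is_upper_bound E (m - eta)).
  { intros H. specialize (Hlub _ H). lra. }
  apply not_all_ex_not in Hnot. destruct Hnot as [x Hx].
  apply imply_to_and in Hx. destruct Hx as [[a0 [Ha0 ->]] Hx]. apply Rnot_le_lt in Hx.
  exists a0. split; [exact Ha0|]. intros a b Ha Hab Hb.
  assert (C1 : RInt mu a b + RInt mu b 1 = RInt mu a 1).
  { exact (RInt_Chasles mu a b 1 (mu_ex a b Ha Hab) (mu_ex b 1 ltac:(lra) ltac:(lra))). }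
  assert (C2 : RInt mu b a0 + RInt mu a0 1 = RInt mu b 1).
  { exact (RInt_Chasles mu b a0 1 (mu_ex b a0 ltac:(lra) Hb) (mu_ex a0 1 ltac:(lra) ltac:(lra))). }
  assert (P : 0 <= RInt mu b a0).
  { apply RInt_ge_0; [exact Hb|apply mu_ex; lra|]. intros z Hz. apply Rlt_le, Hmu_pos. lra. }
  assert (Ha1 : RInt mu a 1 <= m).
  { destruct (Req_dec a 1) as [->|Hne].
    - lra.
    - apply Hub. exists a. split; [lra|reflexivity]. }
  lra.
Qed.


Definition g (v : R -> Fm) (t s : R) : F := SmF (t - s) (v s).

Lemma g_cont v t s : (forall z, continuous v z) -> s < t -> continuous (g v t) s.
Proof.
  intros Hv Hst. apply contC_of_eps. intros eps Heps.
  destruct (HSmFc (v s) (t - s) ltac:(simpl; lra) eps Heps) as [d1 [Hd1 H1]].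
  destruct (epsC_of_cont v s (Hv s) d1 Hd1) as [d2 [Hd2 H2]].
  exists (Rmin (Rmin d1 d2) (t - s)). split.
  { apply Rmin_pos; [apply Rmin_pos|]; lra. }
  intros y Hy.
  generalize (Rmin_l (Rmin d1 d2) (t - s)) (Rmin_r (Rmin d1 d2) (t - s)) (Rmin_l d1 d2) (Rmin_r d1 d2). intros.
  unfold g. apply H1.
  - simpl. apply Rabs_def2 in Hy. lra.
  - apply H2. lra.
  - replace (t - y - (t - s)) with (- (y - s)) by ring. rewrite Rabs_Ropp. lra.
Qed.

Lemma exp_nonpos_le1 x : x <= 0 -> exp x <= 1.
Proof. intros H. rewrite <- exp_0. apply exp_le, H. Qed.

Lemma g_tail v c t x y : (forall z, continuous v z) -> (forall s, 0 <= s -> norm (v s) <= c) ->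
  0 <= x -> x <= y -> y < t ->
  ex_RInt (g v t) x y /\ norm (RInt (g v t) x y) <= c * RInt mu (t - y) (t - x).
Proof.
  intros Hv Hc Hx Hxy Hyt.
  assert (Hex : ex_RInt (g v t) x y).
  { apply ex_RInt_continuous. intros z Hz. rewrite Rmin_left, Rmax_right in Hz by lra.
    apply g_cont; [exact Hv|lra]. }
  split; [exact Hex|].
  apply (norm_RInt_le (g v t) (fun s => c * mu (t - s)) x y _ (c * RInt mu (t-y) (t-x))); [lra| |apply RInt_correct, Hex|].
  - intros s Hs. unfold g. eapply Rle_trans; [apply HestFm; lra|].
    assert (H1 : 0 < mu (t - s)) by (apply Hmu_pos; lra).
    assert (H2 : exp (- B * (t - s)) <= 1) by (apply exp_nonpos_le1; nra).
    assert (H3 : 0 < exp (- B * (t - s))) by apply exp_pos.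
    assert (H4 : norm (v s) <= c) by (apply Hc; lra).
    assert (H5 : 0 <= norm (v s)) by apply normC_ge0.
    rewrite Rmult_assoc, (Rmult_comm c). apply Rmult_le_compat_l; [lra|].
    assert (exp (- B * (t - s)) * norm (v s) <= norm (v s)) by (apply Rle_trans with (1 * norm (v s)); [apply Rmult_le_compat_r; lra|lra]).
    lra.
  - exact (is_RInt_scal _ x y c _ (rev_mu t x y ltac:(lra) ltac:(lra))).
Qed.

Definition Wv (v : R -> Fm) (b t : R) : F := Lim0 (fun e => RInt (g v t) b (Rmax b (t - e))).

Lemma W_lim v c b t : (forall z, continuous v z) -> (forall s, 0 <= s -> norm (v s) <= c) ->
  0 <= b -> b <= t -> lim0 (fun e => RInt (g v t) b (Rmax b (t - e))) (Wv v b t).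
Proof.
  intros Hv Hc Hb Hbt. apply Lim0_spec. apply lim0C_exists.
  assert (Hc0 : 0 <= c) by (generalize (normC_ge0 (v 0)) (Hc 0 (Rle_refl 0)); lra).
  intros eta Heta.
  destruct (mu_small (eta / (c + 1))) as [d [Hd Hmu]]; [apply Rdiv_lt_0_compat; lra|].
  exists d. split; [lra|]. intros e e' He He'.
  assert (key : forall x1 x2, x1 = Rmax b (t - e) \/ x1 = Rmax b (t - e') ->
                 x2 = Rmax b (t - e) \/ x2 = Rmax b (t - e') -> x1 <= x2 ->
                 norm (minus (RInt (g v t) b x1) (RInt (g v t) b x2)) <= eta).
  { intros x1 x2 Hx1 Hx2 H12.
    destruct (Req_dec x1 x2) as [<-|Hne].
    - rewrite normC_minus_self. lra.
    - assert (Hbx1 : b <= x1) by (destruct Hx1 as [-> | ->]; apply Rmax_l).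
      assert (Hx2t : x2 < t).
      { assert (x2 = b \/ x2 = t - e \/ x2 = t - e') as HH.
        { destruct Hx2 as [-> | ->]; unfold Rmax; [destruct (Rle_dec b (t - e))|destruct (Rle_dec b (t - e'))]; auto. }
        lra. }
      assert (Hx1t : t - x1 < d).
      { assert (t - e <= x1 \/ t - e' <= x1) as HH.
        { destruct Hx1 as [-> | ->]; [left|right]; apply Rmax_r. }
        lra. }
      destruct (g_tail v c t b x1 Hv Hc Hb Hbx1 ltac:(lra)) as [E1 _].
      destruct (g_tail v c t x1 x2 Hv Hc ltac:(lra) H12 Hx2t) as [E2 N2].
      rewrite normC_minus_sym, RIntC_diff by assumption.
      eapply Rle_trans; [exact N2|].
      assert (Hm := Hmu (t - x2) (t - x1) ltac:(lra) ltac:(lra) ltac:(lra)).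
      apply Rle_trans with (c * (eta / (c + 1))); [apply Rmult_le_compat_l; lra|].
      apply Rle_trans with ((c + 1) * (eta / (c + 1))); [apply Rmult_le_compat_r; [apply Rlt_le, Rdiv_lt_0_compat|]; lra|].
      right. field. lra. }
  destruct (Rle_dec (Rmax b (t - e)) (Rmax b (t - e'))) as [H|H].
  - apply key; auto.
  - rewrite normC_minus_sym. apply key; auto. lra.
Qed.


Lemma W_small v c b t eta d : (forall z, continuous v z) -> (forall s, 0 <= s -> norm (v s) <= c) ->
  0 < eta -> (forall a b', 0 < a -> a <= b' -> b' <= d -> RInt mu a b' <= eta) ->
  0 <= b -> b <= t -> t - b <= d -> norm (Wv v b t) <= c * eta.
Proof.
  intros Hv Hc Heta Hmu Hb Hbt Htb.
  assert (Hc0 : 0 <= c) by (generalize (normC_ge0 (v 0)) (Hc 0 (Rle_refl 0)); lra).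
  apply (lim0C_norm_le _ _ _ (W_lim v c b t Hv Hc Hb Hbt)).
  exists 1. split; [lra|]. intros e He.
  destruct (Rle_dec (t - e) b) as [H|H].
  - rewrite Rmax_left by lra. rewrite normC_RInt_point. nra.
  - rewrite Rmax_right by lra.
    destruct (g_tail v c t b (t - e) Hv Hc Hb ltac:(lra) ltac:(lra)) as [_ Hn].
    eapply Rle_trans; [exact Hn|]. apply Rmult_le_compat_l; [exact Hc0|].
    replace (t - (t - e)) with e by ring. apply Hmu; lra.
Qed.

Lemma ex_mu_exp t x : 0 <= x < t -> ex_RInt (fun s => mu (t - s) * exp (- B * s)) 0 x.
Proof.
  intros Hx. apply (ex_RInt_continuous (V:=R_CompleteNormedModule)). intros z Hz.
  rewrite Rmin_left, Rmax_right in Hz by lra.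
  apply (continuous_mult (fun s => mu (t - s)) (fun s => exp (- B * s))).
  - apply (continuous_comp (fun s => t - s) mu).
    + apply (continuous_minus (fun _ => t) (fun s => s)). apply continuous_const. apply continuous_id.
    + apply mu_cont. lra.
  - apply continuous_exp_comp.
    apply (continuous_mult (fun _ => - B) (fun s => s)); [apply continuous_const|apply continuous_id].
Qed.

Lemma W_weighted v c t : (forall z, continuous v z) -> 0 <= c ->
  (forall s, 0 <= s -> norm (v s) <= c * exp (- 2 * B * s)) -> 0 <= t ->
  norm (Wv v 0 t) <= c * N * exp (- B * t).
Proof.
  intros Hv Hc0 Hc Ht.
  assert (Hc' : forall s, 0 <= s -> norm (v s) <= c).
  { intros s Hs. eapply Rle_trans; [apply Hc, Hs|].
    assert (exp (- 2 * B * s) <= 1) by (apply exp_nonpos_le1; nra). nra. }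
  apply (lim0C_norm_le _ _ _ (W_lim v c 0 t Hv Hc' (Rle_refl 0) Ht)).
  assert (HE : 0 < exp (- B * t)) by apply exp_pos.
  exists 1. split; [lra|]. intros e He.
  destruct (Rle_dec (t - e) 0) as [H|H].
  - rewrite Rmax_left by lra. rewrite normC_RInt_point.
    apply Rmult_le_pos; [apply Rmult_le_pos|]; lra.
  - rewrite Rmax_right by lra.
    destruct (g_tail v c t 0 (t - e) Hv Hc' (Rle_refl 0) ltac:(lra) ltac:(lra)) as [Hex _].
    assert (Hm := ex_mu_exp t (t - e) ltac:(lra)).
    apply Rle_trans with (c * exp (- B * t) * RInt (fun s => mu (t - s) * exp (- B * s)) 0 (t - e)).
    + apply (norm_RInt_le (g v t) (fun s => c * exp (- B * t) * (mu (t - s) * exp (- B * s))) 0 (t - e)); [lra| |apply RInt_correct, Hex|].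
      * intros s Hs. unfold g. eapply Rle_trans; [apply HestFm; lra|].
        assert (H1 : 0 < mu (t - s)) by (apply Hmu_pos; lra).
        assert (H3 : 0 < exp (- B * (t - s))) by apply exp_pos.
        assert (H4 := Hc s ltac:(lra)).
        assert (E : exp (- B * (t - s)) * exp (- 2 * B * s) = exp (- B * t) * exp (- B * s)).
        { rewrite <- !exp_plus. f_equal. ring. }
        apply Rle_trans with (mu (t - s) * exp (- B * (t - s)) * (c * exp (- 2 * B * s))).
        { apply Rmult_le_compat_l; [|exact H4]. apply Rmult_le_pos; lra. }
        right. transitivity (mu (t - s) * c * (exp (- B * (t - s)) * exp (- 2 * B * s))); [ring|].
        rewrite E. ring.
      * exact (is_RInt_scal _ 0 (t - e) (c * exp (- B * t)) _ (RInt_correct _ _ _ Hm)).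
    + apply Rle_trans with (c * exp (- B * t) * N); [|right; ring].
      apply Rmult_le_compat_l; [apply Rmult_le_pos; lra|]. apply Hmu_int. lra.
Qed.

Lemma ex_trunc v c t x : (forall z, continuous v z) -> (forall s, 0 <= s -> norm (v s) <= c) ->
  0 <= x -> (x < t \/ x = 0) -> ex_RInt (g v t) 0 x.
Proof.
  intros Hv Hc Hx [H|H].
  - exact (proj1 (g_tail v c t 0 x Hv Hc (Rle_refl 0) Hx H)).
  - subst. exists zero. apply is_RInt_point.
Qed.

Lemma W_minus v1 v2 c1 c2 t : (forall z, continuous v1 z) -> (forall z, continuous v2 z) ->
  (forall s, 0 <= s -> norm (v1 s) <= c1) -> (forall s, 0 <= s -> norm (v2 s) <= c2) -> 0 <= t ->
  Wv (fun s => minus (v1 s) (v2 s)) 0 t = minus (Wv v1 0 t) (Wv v2 0 t).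
Proof.
  intros Hv1 Hv2 Hc1 Hc2 Ht.
  assert (Hv : forall z, continuous (fun s => minus (v1 s) (v2 s)) z).
  { intros z. apply (continuous_minus v1 v2); auto. }
  assert (Hc : forall s, 0 <= s -> norm (minus (v1 s) (v2 s)) <= c1 + c2).
  { intros s Hs. eapply Rle_trans; [apply normC_minus_le|]. generalize (Hc1 s Hs) (Hc2 s Hs). lra. }
  apply (lim0C_unique _ _ _ (W_lim _ _ 0 t Hv Hc (Rle_refl 0) Ht)).
  eapply lim0C_ext; [|apply lim0C_minus; [apply (W_lim v1 c1 0 t)|apply (W_lim v2 c2 0 t)]; auto; lra].
  exists 1. split; [lra|]. intros e He.
  assert (Hx : 0 <= Rmax 0 (t - e)) by apply Rmax_l.
  assert (Hx' : Rmax 0 (t - e) < t \/ Rmax 0 (t - e) = 0).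
  { unfold Rmax. destruct (Rle_dec 0 (t - e)); [left; lra|right; reflexivity]. }
  rewrite <- RInt_minus by (eapply ex_trunc; eauto).
  apply RInt_ext. intros s Hs. rewrite Rmin_left in Hs by exact Hx. rewrite Rmax_right in Hs by exact Hx.
  unfold g. symmetry. apply linC_minus, SmF_lin.
  destruct Hx' as [Hx'|Hx']; lra.
Qed.

Lemma W_tt v c t : (forall z, continuous v z) -> (forall s, 0 <= s -> norm (v s) <= c) -> 0 <= t ->
  Wv v t t = zero.
Proof.
  intros Hv Hc Ht.
  apply (lim0C_unique _ _ _ (W_lim v c t t Hv Hc Ht (Rle_refl t))).
  eapply lim0C_ext; [|apply lim0C_const].
  exists 1. split; [lra|]. intros e He. rewrite Rmax_left by lra. symmetry. apply RInt_point.
Qed.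

Lemma W_split v c b t : (forall z, continuous v z) -> (forall s, 0 <= s -> norm (v s) <= c) ->
  0 <= b -> b <= t -> Wv v 0 t = plus (SF (t - b) (Wv v 0 b)) (Wv v b t).
Proof.
  intros Hv Hc Hb Hbt.
  destruct (Req_dec b t) as [<-|Hne].
  { rewrite (W_tt v c b Hv Hc Hb). replace (b - b) with 0 by ring. rewrite SF_0.
    symmetry. apply plus_zero_r. }
  assert (Hlt : b < t) by lra.
  assert (Step1 : Wv v 0 t = plus (RInt (g v t) 0 b) (Wv v b t)).
  { apply (lim0C_unique _ _ _ (W_lim v c 0 t Hv Hc (Rle_refl 0) ltac:(lra))).
    eapply lim0C_ext; [|apply lim0C_plus; [apply lim0C_const|apply (W_lim v c b t Hv Hc Hb Hbt)]].
    exists (t - b). split; [lra|]. intros e He.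
    rewrite !Rmax_right by lra.
    apply RInt_Chasles.
    - exact (proj1 (g_tail v c t 0 b Hv Hc (Rle_refl 0) Hb Hlt)).
    - exact (proj1 (g_tail v c t b (t - e) Hv Hc Hb ltac:(lra) ltac:(lra))). }
  assert (Step2 : RInt (g v t) 0 b = SF (t - b) (Wv v 0 b)).
  { destruct (Req_dec b 0) as [->|Hb0].
    - rewrite RInt_point, (W_tt v c 0 Hv Hc (Rle_refl 0)).
      symmetry. apply linC_zero, SF_lin. lra.
    - apply (lim0C_unique (fun e => RInt (g v t) 0 (Rmax 0 (b - e)))).
      + apply RInt_upper_lim; [lra|]. intros z Hz. apply g_cont; [exact Hv|lra].
      + eapply lim0C_ext; [|apply lim0C_blin; [apply (SF_blin (t - b)); lra|apply (W_lim v c 0 b Hv Hc (Rle_refl 0) Hb)]].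
        exists b. split; [lra|]. intros e He. rewrite Rmax_right by lra.
        assert (Hex := proj1 (g_tail v c b 0 (b - e) Hv Hc (Rle_refl 0) ltac:(lra) ltac:(lra))).
        rewrite <- (is_RInt_unique _ _ _ _ (is_RInt_lin (SF (t - b)) (g v b) 0 (b - e) _ (SF_blin (t - b) ltac:(lra)) (RInt_correct _ _ _ Hex))).
        apply RInt_ext. intros s Hs. rewrite Rmin_left in Hs by lra. rewrite Rmax_right in Hs by lra.
        unfold g. rewrite <- SmF_semi by lra. f_equal. ring. }
  rewrite Step1, Step2. reflexivity.
Qed.


Lemma U_cont v c t : (forall z, continuous v z) -> (forall s, 0 <= s -> norm (v s) <= c) -> 0 <= t ->
  forall eps, 0 < eps -> exists delta, 0 < delta /\ forall s, 0 <= s -> Rabs (s - t) < delta ->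
    norm (minus (Wv v 0 s) (Wv v 0 t)) < eps.
Proof.
  intros Hv Hc Ht eps Heps.
  assert (Hc0 : 0 <= c) by (generalize (normC_ge0 (v 0)) (Hc 0 (Rle_refl 0)); lra).
  set (eta := eps / (3 * (c + 1))).
  assert (Heta : 0 < eta) by (unfold eta; apply Rdiv_lt_0_compat; lra).
  assert (Hceta : c * eta < eps / 3).
  { unfold eta. apply Rlt_le_trans with ((c + 1) * (eps / (3 * (c + 1)))).
    - apply Rmult_lt_compat_r; [apply Rdiv_lt_0_compat|]; lra.
    - right. field. lra. }
  destruct (mu_small eta Heta) as [d [Hd Hmu]].
  set (b := Rmax 0 (t - d / 2)).
  assert (Hb0 : 0 <= b) by apply Rmax_l.
  assert (Hbt : b <= t) by (unfold b; apply Rmax_lub; lra).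
  assert (Htb : t - b <= d / 2) by (unfold b; generalize (Rmax_r 0 (t - d/2)); lra).
  destruct (HSFc (Wv v 0 b) (t - b) ltac:(simpl; lra) (eps / 3) ltac:(lra)) as [d1 [Hd1 H1]].
  exists (Rmin d1 (d / 2)). split; [apply Rmin_pos; lra|].
  intros s Hs Hst.
  generalize (Rmin_l d1 (d / 2)) (Rmin_r d1 (d / 2)); intros.
  apply Rabs_def2 in Hst.
  assert (Hbs : b <= s).
  { unfold b. apply Rmax_lub; lra. }
  assert (Hsb : s - b <= d).
  { unfold b. unfold Rmax. destruct (Rle_dec 0 (t - d / 2)); lra. }
  rewrite (W_split v c b s Hv Hc Hb0 Hbs), (W_split v c b t Hv Hc Hb0 Hbt).
  rewrite minusC_plus_plus.
  eapply Rle_lt_trans; [apply normC_triangle|].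
  assert (A1 : norm (minus (SF (s - b) (Wv v 0 b)) (SF (t - b) (Wv v 0 b))) < eps / 3).
  { apply H1.
    - simpl. lra.
    - rewrite norm_minus_self. exact Hd1.
    - replace (s - b - (t - b)) with (s - t) by ring. apply Rabs_def1; lra. }
  assert (A2 : norm (Wv v b s) <= c * eta) by (apply (W_small v c b s eta d); auto; lra).
  assert (A3 : norm (Wv v b t) <= c * eta) by (apply (W_small v c b t eta d); auto; lra).
  generalize (normC_minus_le (Wv v b s) (Wv v b t)). lra.
Qed.

Lemma L3 v c t : (forall z, continuous v z) -> (forall s, 0 <= s -> norm (v s) <= c) -> 0 < t ->
  is_RInt (fun s => S (Rmax 0 (t - s)) (v s)) 0 t (iF (Wv v 0 t)).
Proof.
  intros Hv Hc Ht.
  destruct (ubp Fm S S_blin S_0 (fun x => S_cont x 0 (Rle_refl 0))) as [M [d [Hd [HM HMb]]]].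
  destruct iF_bound as [Ci [HCi HCib]].
  set (h := fun s => S (Rmax 0 (t - s)) (v s)).
  assert (Hh : forall z, 0 <= z <= t -> continuous h z).
  { intros z Hz. apply contC_of_eps. intros eps Heps.
    destruct (Req_dec z t) as [->|Hzt].
    - destruct (epsC_of_cont v t (Hv t) (eps / (2 * (M + 1)))) as [d1 [Hd1 H1]].
      { apply Rdiv_lt_0_compat; lra. }
      destruct (S_cont (v t) 0 (Rle_refl 0) (eps / 2) ltac:(lra)) as [d2 [Hd2 H2]].
      exists (Rmin (Rmin d1 d2) d). split; [apply Rmin_pos; [apply Rmin_pos|]; lra|].
      intros y Hy.
      generalize (Rmin_l (Rmin d1 d2) d) (Rmin_r (Rmin d1 d2) d) (Rmin_l d1 d2) (Rmin_r d1 d2); intros.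
      apply Rabs_def2 in Hy as Hy'.
      unfold h. replace (t - t) with 0 by ring. rewrite (Rmax_left 0 0) by lra.
      set (r := Rmax 0 (t - y)).
      assert (Hr : 0 <= r <= d /\ r < d2).
      { unfold r, Rmax. destruct (Rle_dec 0 (t - y)); lra. }
      rewrite (minus_trans (S r (v t))).
      eapply Rle_lt_trans; [apply normC_triangle|].
      rewrite <- linC_minus by (apply S_blin; lra).
      assert (B1 : norm (S r (minus (v y) (v t))) < eps / 2).
      { eapply Rle_lt_trans; [apply HMb; lra|].
        assert (norm (minus (v y) (v t)) < eps / (2 * (M + 1))) by (apply H1; lra).
        apply Rle_lt_trans with (M * (eps / (2 * (M + 1)))).
        - apply Rmult_le_compat_l; lra.
        - apply Rlt_le_trans with ((M + 1) * (eps / (2 * (M + 1)))).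
          + apply Rmult_lt_compat_r; [apply Rdiv_lt_0_compat|]; lra.
          + right. field. lra. }
      assert (B2 : norm (minus (S r (v t)) (S 0 (v t))) < eps / 2).
      { apply H2; [lra|]. rewrite Rminus_0_r, Rabs_right; lra. }
      apply Rlt_le_trans with (eps / 2 + eps / 2); [apply Rplus_lt_compat; [exact B1|exact B2]|lra].
    - destruct (epsC_of_cont (g v t) z (g_cont v t z Hv ltac:(lra)) (eps / Ci)) as [d1 [Hd1 H1]].
      { apply Rdiv_lt_0_compat; lra. }
      exists (Rmin d1 (t - z)). split; [apply Rmin_pos; lra|].
      intros y Hy. generalize (Rmin_l d1 (t - z)) (Rmin_r d1 (t - z)); intros.
      apply Rabs_def2 in Hy as Hy'.
      unfold h. rewrite !Rmax_right by lra.
      rewrite <- !HSmF by lra.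
      rewrite <- linC_minus by exact (proj1 iF_blin).
      eapply Rle_lt_trans; [apply HCib|].
      assert (Hg : norm (minus (g v t y) (g v t z)) < eps / Ci) by (apply H1; lra).
      unfold g in Hg.
      apply Rlt_le_trans with (Ci * (eps / Ci)); [apply Rmult_lt_compat_l; [lra|exact Hg]|].
      right. field. lra. }
  assert (Hex : ex_RInt h 0 t).
  { apply ex_RInt_continuous. intros z Hz. rewrite Rmin_left, Rmax_right in Hz by lra. apply Hh, Hz. }
  assert (E : RInt h 0 t = iF (Wv v 0 t)).
  { apply (lim0C_unique (fun e => RInt h 0 (Rmax 0 (t - e)))).
    - apply RInt_upper_lim; [lra|]. exact Hh.
    - eapply lim0C_ext; [|apply lim0C_blin; [exact iF_blin|apply (W_lim v c 0 t Hv Hc (Rle_refl 0)); lra]].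
      exists t. split; [lra|]. intros e He. rewrite Rmax_right by lra.
      assert (Hex2 := proj1 (g_tail v c t 0 (t - e) Hv Hc (Rle_refl 0) ltac:(lra) ltac:(lra))).
      rewrite <- (is_RInt_unique _ _ _ _ (is_RInt_lin iF (g v t) 0 (t - e) _ iF_blin (RInt_correct _ _ _ Hex2))).
      apply RInt_ext. intros s Hs. rewrite Rmin_left in Hs by lra. rewrite Rmax_right in Hs by lra.
      unfold h, g. rewrite Rmax_right by lra. apply HSmF. lra. }
  rewrite <- E. apply RInt_correct, Hex.
Qed.


Definition p0 (t : R) := Rmax 0 t.
Definition xi' (s : R) : Fm := xi (p0 s).
Definition vof (phi : R -> F) (s : R) : Fm := plus (Pq (phi s) (phi s)) (xi' s).

Lemma p0_lip y z : Rabs (p0 y - p0 z) <= Rabs (y - z).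
Proof. unfold p0, Rmax. destruct (Rle_dec 0 y), (Rle_dec 0 z); unfold Rabs; repeat destruct Rcase_abs; lra. Qed.
Lemma p0_nonneg y : 0 <= p0 y.
Proof. apply Rmax_l. Qed.
Lemma p0_id y : 0 <= y -> p0 y = y.
Proof. intros H. unfold p0. apply Rmax_right, H. Qed.
Lemma p0_p0 y : p0 (p0 y) = p0 y.
Proof. apply p0_id, p0_nonneg. Qed.

Lemma xi'_cont z : continuous xi' z.
Proof.
  apply (cont_of_eps (V:=CompleteNormedModule.NormedModule R_AbsRing Fm)). intros eps Heps.
  destruct (Hxi_lip (p0 z + 1)) as [L HL]. { generalize (p0_nonneg z); lra. }
  set (L' := Rabs L + 1).
  assert (HL' : 0 < L') by (unfold L'; generalize (Rabs_pos L); lra).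
  exists (Rmin 1 (eps / L')). split; [apply Rmin_pos; [lra|apply Rdiv_lt_0_compat; lra]|].
  intros y Hy. generalize (Rmin_l 1 (eps / L')) (Rmin_r 1 (eps / L')); intros Hm1 Hm2.
  generalize (p0_lip y z) (p0_nonneg y) (p0_nonneg z); intros H1 Hy0 Hz0.
  unfold xi'.
  assert (Hpy : p0 y <= p0 z + 1).
  { assert (Rabs (p0 y - p0 z) < 1) by lra. apply Rabs_def2 in H. lra. }
  eapply Rle_lt_trans; [apply HL; [split; [exact Hz0|lra]|split; [exact Hy0|exact Hpy]]|].
  apply Rle_lt_trans with (L' * Rabs (y - z)).
  - assert (Ha : 0 <= Rabs (p0 y - p0 z)) by apply Rabs_pos.
    assert (HLL : L <= L') by (unfold L'; generalize (RRle_abs L); lra).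
    apply Rle_trans with (L' * Rabs (p0 y - p0 z)); [apply Rmult_le_compat_r; lra|].
    apply Rmult_le_compat_l; lra.
  - apply Rlt_le_trans with (L' * (eps / L')); [apply Rmult_lt_compat_l; lra|]. right; field; lra.
Qed.

Lemma Pq_diff a b : norm (minus (Pq a a) (Pq b b)) <= K * norm (minus a b) * (norm a + norm b).
Proof.
  rewrite (minus_trans (Pq b a)).
  rewrite <- (linC_minus (fun x => Pq x a)) by exact (proj1 HPbil a).
  rewrite <- (linC_minus (fun y => Pq b y)) by exact (proj2 HPbil b).
  eapply Rle_trans; [apply normC_triangle|].
  generalize (HPbnd (minus a b) a) (HPbnd b (minus a b)). intros H1 H2.
  apply Rle_trans with (K * norm (minus a b) * norm a + K * norm b * norm (minus a b)); [|right; ring].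
  apply Rplus_le_compat; [exact H1|exact H2].
Qed.

Lemma vof_cont phi : (forall z, continuous phi z) -> forall z, continuous (vof phi) z.
Proof.
  intros Hphi z. unfold vof. apply (continuous_plus (fun s => Pq (phi s) (phi s)) xi'); [|apply xi'_cont].
  apply contC_of_eps. intros eps Heps.
  set (M := norm (phi z)).
  set (D := K * (2 * M + 1) + 1).
  assert (HM : 0 <= M) by apply normC_ge0.
  assert (HD : 0 < D) by (unfold D; nra).
  destruct (epsC_of_cont phi z (Hphi z) (Rmin 1 (eps / D))) as [d [Hd H]].
  { apply Rmin_pos; [lra|apply Rdiv_lt_0_compat; lra]. }
  exists d. split; [exact Hd|]. intros y Hy. specialize (H y Hy).
  generalize (Rmin_l 1 (eps / D)) (Rmin_r 1 (eps / D)); intros.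
  eapply Rle_lt_trans; [apply Pq_diff|].
  assert (Hy2 : norm (phi y) <= M + 1).
  { generalize (normC_ge_minus (phi y) (phi z)). unfold M. lra. }
  assert (Hn : 0 <= norm (minus (phi y) (phi z))) by apply normC_ge0.
  apply Rle_lt_trans with (K * norm (minus (phi y) (phi z)) * (2 * M + 1)).
  - apply Rmult_le_compat_l; [apply Rmult_le_pos; lra|]. unfold M in *. lra.
  - apply Rle_lt_trans with (norm (minus (phi y) (phi z)) * D).
    + unfold D. nra.
    + apply Rlt_le_trans with ((eps / D) * D). apply Rmult_lt_compat_r; lra. right; field; lra.
Qed.

Lemma exp_2B s : exp (- 2 * B * s) = exp (- B * s) * exp (- B * s).
Proof. rewrite <- exp_plus. f_equal. ring. Qed.

Lemma vof_bound phi Rb : 0 <= Rb -> (forall s, 0 <= s -> norm (phi s) <= Rb * exp (- B * s)) ->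
  forall s, 0 <= s -> norm (vof phi s) <= (K * Rb ^ 2 + J) * exp (- 2 * B * s).
Proof.
  intros HR Hphi s Hs. unfold vof, xi'. rewrite p0_id by exact Hs.
  eapply Rle_trans; [apply normC_triangle|].
  generalize (HPbnd (phi s) (phi s)) (Hphi s Hs) (Hxi_bnd s Hs) (normC_ge0 (phi s)). intros H1 H2 H3 H4.
  rewrite exp_2B in *. assert (0 < exp (- B * s)) by apply exp_pos.
  assert (H5 : norm (phi s) * norm (phi s) <= (Rb * exp (- B * s)) * (Rb * exp (- B * s))).
  { apply Rmult_le_compat; lra. }
  nra.
Qed.

Lemma minusC_plus_r (a b x : Fm) : minus (plus a x) (plus b x) = minus a b.
Proof. rewrite minusC_plus_plus, minusC_eq_zero. exact (plus_zero_r _). Qed.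

Lemma vof_diff phi psi D R1 R2 : (forall s, 0 <= s -> norm (minus (phi s) (psi s)) <= D * exp (- B * s)) ->
  (forall s, 0 <= s -> norm (phi s) <= R1 * exp (- B * s)) -> (forall s, 0 <= s -> norm (psi s) <= R2 * exp (- B * s)) ->
  forall s, 0 <= s -> norm (minus (vof phi s) (vof psi s)) <= K * D * (R1 + R2) * exp (- 2 * B * s).
Proof.
  intros HD H1 H2 s Hs. unfold vof. rewrite minusC_plus_r.
  eapply Rle_trans; [apply Pq_diff|].
  generalize (HD s Hs) (H1 s Hs) (H2 s Hs) (normC_ge0 (minus (phi s) (psi s))) (normC_ge0 (phi s)) (normC_ge0 (psi s)).
  intros A1 A2 A3 A4 A5 A6. rewrite exp_2B. assert (0 < exp (- B * s)) by apply exp_pos.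
  apply Rle_trans with (K * (D * exp (- B * s)) * (R1 * exp (- B * s) + R2 * exp (- B * s))).
  - apply Rmult_le_compat.
    + apply Rmult_le_pos; [lra|exact A4].
    + apply Rplus_le_le_0_compat; [exact A5|exact A6].
    + apply Rmult_le_compat_l; [lra|exact A1].
    + apply Rplus_le_compat; [exact A2|exact A3].
  - right. ring.
Qed.


Definition Phi (phi : R -> F) (t : R) : F := plus (SF (p0 t) f0) (Wv (vof phi) 0 (p0 t)).

Lemma vof_gbound phi Rb : 0 <= Rb -> (forall s, 0 <= s -> norm (phi s) <= Rb * exp (- B * s)) ->
  forall s, 0 <= s -> norm (vof phi s) <= K * Rb ^ 2 + J.
Proof.
  intros HR H s Hs. eapply Rle_trans; [apply (vof_bound phi Rb HR H s Hs)|].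
  assert (exp (- 2 * B * s) <= 1) by (apply exp_nonpos_le1; nra).
  assert (0 <= K * Rb ^ 2 + J) by (assert (0 <= Rb ^ 2) by (apply pow2_ge_0); nra).
  assert (0 < exp (- 2 * B * s)) by apply exp_pos. nra.
Qed.

Lemma Phi_cont phi Rb : (forall z, continuous phi z) -> 0 <= Rb ->
  (forall s, 0 <= s -> norm (phi s) <= Rb * exp (- B * s)) -> forall z, continuous (Phi phi) z.
Proof.
  intros Hc HR Hb z. unfold Phi.
  apply (continuous_plus (fun t => SF (p0 t) f0) (fun t => Wv (vof phi) 0 (p0 t))).
  - apply contC_of_eps. intros eps Heps.
    destruct (HSFc f0 (p0 z) (p0_nonneg z) eps Heps) as [d [Hd H]].
    exists d. split; [exact Hd|]. intros y Hy. apply H.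
    + apply p0_nonneg.
    + rewrite norm_minus_self. exact Hd.
    + eapply Rle_lt_trans; [apply p0_lip|exact Hy].
  - apply contC_of_eps. intros eps Heps.
    destruct (U_cont (vof phi) _ (p0 z) (vof_cont phi Hc) (vof_gbound phi Rb HR Hb) (p0_nonneg z) eps Heps) as [d [Hd H]].
    exists d. split; [exact Hd|]. intros y Hy. apply H.
    + apply p0_nonneg.
    + eapply Rle_lt_trans; [apply p0_lip|exact Hy].
Qed.

Lemma Phi_bound phi Rb : (forall z, continuous phi z) -> 0 <= Rb ->
  (forall s, 0 <= s -> norm (phi s) <= Rb * exp (- B * s)) ->
  forall t, 0 <= t -> norm (Phi phi t) <= (norm f0 + N * J + N * K * Rb ^ 2) * exp (- B * t).
Proof.
  intros Hc HR Hb t Ht. unfold Phi. rewrite p0_id by exact Ht.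
  eapply Rle_trans; [apply normC_triangle|].
  assert (H1 := HestF t f0 Ht).
  assert (HcK : 0 <= K * Rb ^ 2 + J) by (assert (0 <= Rb ^ 2) by (apply pow2_ge_0); nra).
  assert (H2 := W_weighted (vof phi) (K * Rb ^ 2 + J) t (vof_cont phi Hc) HcK (vof_bound phi Rb HR Hb) Ht).
  apply Rle_trans with (exp (- B * t) * norm f0 + (K * Rb ^ 2 + J) * N * exp (- B * t)).
  - apply Rplus_le_compat; [exact H1|exact H2].
  - right. ring.
Qed.

Lemma Phi_diff phi psi R1 R2 D : (forall z, continuous phi z) -> (forall z, continuous psi z) ->
  0 <= R1 -> 0 <= R2 -> 0 <= D ->
  (forall s, 0 <= s -> norm (phi s) <= R1 * exp (- B * s)) ->
  (forall s, 0 <= s -> norm (psi s) <= R2 * exp (- B * s)) ->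
  (forall s, 0 <= s -> norm (minus (phi s) (psi s)) <= D * exp (- B * s)) ->
  forall t, 0 <= t -> norm (minus (Phi phi t) (Phi psi t)) <= K * D * (R1 + R2) * N * exp (- B * t).
Proof.
  intros Hc1 Hc2 HR1 HR2 HD Hb1 Hb2 Hd t Ht. unfold Phi. rewrite p0_id by exact Ht.
  rewrite normC_minus_plus_r.
  rewrite <- (W_minus (vof phi) (vof psi) _ _ t (vof_cont phi Hc1) (vof_cont psi Hc2)
                (vof_gbound phi R1 HR1 Hb1) (vof_gbound psi R2 HR2 Hb2) Ht).
  apply W_weighted; [| |apply vof_diff; auto|exact Ht].
  - intros z. apply (continuous_minus (vof phi) (vof psi)); apply vof_cont; auto.
  - apply Rmult_le_pos; [apply Rmult_le_pos|]; lra.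
Qed.

Fixpoint phin (n : nat) : R -> F :=
  match n with O => fun _ => zero | Datatypes.S k => Phi (phin k) end.

Fixpoint Rn (n : nat) : R :=
  match n with O => 0 | Datatypes.S k => norm f0 + N * J + N * K * (Rn k) ^ 2 end.

Lemma Rstar_facts : 0 <= (norm f0 + N * J) * Xfun (4 * K * N * (norm f0 + N * J)) /\
  (norm f0 + N * J) * Xfun (4 * K * N * (norm f0 + N * J)) =
  norm f0 + N * J + N * K * ((norm f0 + N * J) * Xfun (4 * K * N * (norm f0 + N * J))) ^ 2.
Proof.
  set (F0 := norm f0 + N * J).
  assert (HF0 : 0 <= F0) by (unfold F0; generalize (normC_ge0 f0); nra).
  unfold Xfun. destruct (Req_EM_T (4 * K * N * F0) 0) as [Hz|Hz].
  - assert (F0 = 0) by (apply Rmult_integral in Hz; destruct Hz as [Hz|Hz]; [exfalso; nra|exact Hz]).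
    rewrite H. split; [lra|ring].
  - set (z := 4 * K * N * F0) in *.
    assert (HF0' : F0 <> 0) by (intro E0; apply Hz; unfold z; rewrite E0; ring).
    assert (Hzp : 0 < z) by (unfold z; repeat apply Rmult_lt_0_compat; lra).
    assert (Hz1 : z <= 1) by exact Hsmall.
    set (q := sqrt (1 - z)).
    assert (Hq2 : q * q = 1 - z) by (unfold q; apply sqrt_sqrt; lra).
    assert (Hq0 : 0 <= q) by (unfold q; apply sqrt_pos).
    assert (Hq1 : q <= 1) by nra.
    assert (E : F0 * ((1 - q) / (z / 2)) = (1 - q) / (2 * K * N)).
    { unfold z. field. split; [lra|]. split; [lra|]. exact HF0'. }
    rewrite E. split.
    + apply Rdiv_le_0_compat; nra.
    + assert (HzF : F0 = z / (4 * K * N)) by (unfold z; field; lra).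
      rewrite HzF. replace z with (1 - q * q) by lra.
      field. lra.
Qed.


Lemma Rn_facts n : 0 <= Rn n /\ Rn n <= (norm f0 + N * J) * Xfun (4 * K * N * (norm f0 + N * J)) /\ Rn n <= Rn (Datatypes.S n).
Proof.
  destruct Rstar_facts as [HR0 HReq].
  set (Rs := (norm f0 + N * J) * Xfun (4 * K * N * (norm f0 + N * J))) in *.
  assert (HF0 : 0 <= norm f0 + N * J) by (generalize (normC_ge0 f0); nra).
  induction n as [|n IH].
  - simpl. split; [lra|]. split; [lra|]. assert (0 <= N * K * 0 ^ 2) by (simpl; nra). lra.
  - destruct IH as [I1 [I2 I3]].
    assert (A1 : 0 <= Rn (Datatypes.S n)) by lra.
    split; [exact A1|]. split.
    + change (norm f0 + N * J + N * K * (Rn n) ^ 2 <= Rs). rewrite HReq.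
      assert (Rn n ^ 2 <= Rs ^ 2) by (apply pow_incr; lra).
      assert (N * K * Rn n ^ 2 <= N * K * Rs ^ 2) by (apply Rmult_le_compat_l; [nra|lra]). lra.
    + change (norm f0 + N * J + N * K * (Rn n) ^ 2 <= norm f0 + N * J + N * K * (Rn (Datatypes.S n)) ^ 2).
      assert (Rn n ^ 2 <= Rn (Datatypes.S n) ^ 2) by (apply pow_incr; lra).
      assert (N * K * Rn n ^ 2 <= N * K * Rn (Datatypes.S n) ^ 2) by (apply Rmult_le_compat_l; [nra|lra]). lra.
Qed.

Lemma Rn_mono n m : (n <= m)%nat -> Rn n <= Rn m.
Proof.
  intros H. induction H; [lra|]. generalize (proj2 (proj2 (Rn_facts m))). lra.
Qed.

Lemma phin_inv n : (forall z, continuous (phin n) z) /\ (forall t, 0 <= t -> norm (phin n t) <= Rn n * exp (- B * t)).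
Proof.
  induction n as [|n [IHc IHb]].
  - split.
    + intros z. apply continuous_const.
    + intros t Ht. simpl. rewrite normC_zero. lra.
  - destruct (Rn_facts n) as [H0 _].
    split.
    + exact (Phi_cont (phin n) (Rn n) IHc H0 IHb).
    + intros t Ht. exact (Phi_bound (phin n) (Rn n) IHc H0 IHb t Ht).
Qed.

Lemma phin_diff n : forall t, 0 <= t ->
  norm (minus (phin (Datatypes.S n) t) (phin n t)) <= (Rn (Datatypes.S n) - Rn n) * exp (- B * t).
Proof.
  induction n as [|n IH]; intros t Ht.
  - replace (minus (phin 1 t) (phin 0 t)) with (phin 1 t) by (symmetry; exact (minusC_zero_r (phin 1 t))).
    replace (Rn 1 - Rn 0) with (Rn 1) by (simpl; ring). apply (proj2 (phin_inv 1)), Ht.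
  - destruct (phin_inv (Datatypes.S n)) as [C1 B1]. destruct (phin_inv n) as [C2 B2].
    destruct (Rn_facts (Datatypes.S n)) as [R1 _]. destruct (Rn_facts n) as [R2 [_ R3]].
    assert (HD : 0 <= Rn (Datatypes.S n) - Rn n) by lra.
    eapply Rle_trans.
    { exact (Phi_diff (phin (Datatypes.S n)) (phin n) _ _ _ C1 C2 R1 R2 HD B1 B2 IH t Ht). }
    right. change (Rn (Datatypes.S (Datatypes.S n))) with (norm f0 + N * J + N * K * (Rn (Datatypes.S n)) ^ 2).
    change (Rn (Datatypes.S n)) with (norm f0 + N * J + N * K * (Rn n) ^ 2). ring.
Qed.

Lemma phin_tele n m : (n <= m)%nat -> forall t, 0 <= t ->
  norm (minus (phin m t) (phin n t)) <= (Rn m - Rn n) * exp (- B * t).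
Proof.
  intros H. induction H as [|m Hnm IH]; intros t Ht.
  - rewrite normC_minus_self. lra.
  - eapply Rle_trans; [apply (normC_triangle_minus _ (phin m t))|].
    generalize (phin_diff m t Ht) (IH t Ht). intros. 
    apply Rle_trans with ((Rn (Datatypes.S m) - Rn m) * exp (- B * t) + (Rn m - Rn n) * exp (- B * t)); [lra|].
    right. ring.
Qed.

Lemma phin_p0 n t : phin n (p0 t) = phin n t.
Proof. destruct n; [reflexivity|]. simpl. unfold Phi. rewrite p0_p0. reflexivity. Qed.


Lemma limseqC_intro (u : nat -> F) l :
  (forall eta, 0 < eta -> exists N0, forall n, (N0 <= n)%nat -> norm (minus (u n) l) <= eta) -> limseq u l.
Proof. intros H. exact H. Qed.

Definition phiL (t : R) : F := epsilon (inhabits zero) (fun l => limseq (fun n => phin n (p0 t)) l).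

Lemma main_result : exists phi : R -> F,
    continuous_on_nonneg phi /\
    (forall t, 0 <= t ->
       is_RInt (fun s => S (t - s) (plus (Pq (phi s) (phi s)) (xi s))) 0 t
               (minus (iF (phi t)) (S t (iF f0)))) /\
    (forall t, 0 <= t ->
       norm (phi t) <= (norm f0 + N * J) * Xfun (4 * K * N * (norm f0 + N * J))
                       * exp (- B * t)).
Proof.
  set (Rs := (norm f0 + N * J) * Xfun (4 * K * N * (norm f0 + N * J))).
  assert (Hgrow : Un_growing Rn) by (intros n; apply (Rn_facts n)).
  assert (Hub : has_ub Rn).
  { exists Rs. intros x [i ->]. apply (Rn_facts i). }
  destruct (growing_cv Rn Hgrow Hub) as [Rl HRl].
  assert (HRnl : forall n, Rn n <= Rl) by (apply growing_ineq; auto).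
  assert (HRls : Rl <= Rs).
  { apply (Rle_cv_lim (Un := Rn) (Vn := fun _ => Rs)); [intros n; apply (Rn_facts n)|exact HRl|].
    intros eps Heps. exists O. intros n _. unfold Rdist. rewrite Rminus_eq_0, Rabs_R0. lra. }
  assert (HRl0 : 0 <= Rl) by (generalize (HRnl O); simpl; lra).
  assert (Hsmall_n : forall eta, 0 < eta -> exists N0, forall n, (N0 <= n)%nat -> Rl - Rn n < eta).
  { intros eta Heta. destruct (HRl eta Heta) as [N0 HN0]. exists N0. intros n Hn.
    specialize (HN0 n Hn). unfold Rdist in HN0. apply Rabs_def2 in HN0. lra. }
  assert (Hexp1 : forall t, exp (- B * p0 t) <= 1).
  { intros t. apply exp_nonpos_le1. generalize (p0_nonneg t); nra. }
  assert (Hexp0 : forall t, 0 < exp (- B * p0 t)) by (intros; apply exp_pos).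
  assert (HL : forall t, limseq (fun n => phin n (p0 t)) (phiL t)).
  { intros t. unfold phiL. apply epsilon_spec. apply limseqC_exists.
    intros eta Heta. destruct (Hsmall_n eta Heta) as [N0 HN0]. exists N0. intros n m Hn Hm.
    assert (Hnm : forall a b, (N0 <= a)%nat -> (a <= b)%nat -> norm (minus (phin b (p0 t)) (phin a (p0 t))) <= eta).
    { intros a b Ha Hab. eapply Rle_trans; [apply phin_tele; [exact Hab|apply p0_nonneg]|].
      generalize (Rn_mono a b Hab) (HRnl b) (HN0 a Ha) (Hexp1 t) (Hexp0 t). intros. nra. }
    destruct (Nat.le_ge_cases n m) as [H|H].
    - rewrite normC_minus_sym. apply Hnm; auto.
    - apply Hnm; auto. }
  assert (Htail : forall t n, norm (minus (phiL t) (phin n (p0 t))) <= (Rl - Rn n) * exp (- B * p0 t)).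
  { intros t n. apply (limseqC_le _ _ _ _ (HL t)). exists n. intros m Hm.
    eapply Rle_trans; [apply phin_tele; [exact Hm|apply p0_nonneg]|].
    apply Rmult_le_compat_r; [generalize (Hexp0 t); lra|]. generalize (HRnl m); lra. }
  assert (Hbnd : forall t, norm (phiL t) <= Rl * exp (- B * p0 t)).
  { intros t. rewrite <- (minusC_zero_r (phiL t)). apply (limseqC_le _ _ _ _ (HL t)). exists O.
    intros m _. rewrite minusC_zero_r. eapply Rle_trans; [apply (proj2 (phin_inv m)), p0_nonneg|].
    apply Rmult_le_compat_r; [generalize (Hexp0 t); lra|apply HRnl]. }
  assert (Hbnd' : forall t, 0 <= t -> norm (phiL t) <= Rl * exp (- B * t)).
  { intros t Ht. rewrite <- (p0_id t Ht) at 2. apply Hbnd. }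
  assert (Hcont : forall z, continuous phiL z).
  { intros z. apply contC_of_eps. intros eps Heps.
    destruct (Hsmall_n (eps / 3) ltac:(lra)) as [N0 HN0]. specialize (HN0 N0 (Nat.le_refl _)).
    destruct (epsC_of_cont (phin N0) z (proj1 (phin_inv N0) z) (eps / 3) ltac:(lra)) as [d [Hd H]].
    exists d. split; [exact Hd|]. intros y Hy.
    assert (A1 : norm (minus (phiL y) (phin N0 y)) <= eps / 3).
    { rewrite <- phin_p0. eapply Rle_trans; [apply Htail|]. generalize (Hexp1 y) (Hexp0 y) (HRnl N0); intros; nra. }
    assert (A2 : norm (minus (phin N0 z) (phiL z)) <= eps / 3).
    { rewrite normC_minus_sym, <- phin_p0. eapply Rle_trans; [apply Htail|]. generalize (Hexp1 z) (Hexp0 z) (HRnl N0); intros; nra. }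
    assert (A3 : norm (minus (phin N0 y) (phin N0 z)) < eps / 3) by (apply H, Hy).
    eapply Rle_lt_trans; [apply (normC_triangle_minus _ (phin N0 y))|].
    eapply Rle_lt_trans; [apply Rplus_le_compat_l, (normC_triangle_minus _ (phin N0 z))|].
    lra. }
  assert (Hfix : forall t, 0 <= t -> phiL t = Phi phiL t).
  { intros t Ht. apply (limseqC_unique (fun n => phin (Datatypes.S n) (p0 t))).
    - exact (limseq_shift _ _ (HL t)).
    - apply limseqC_intro. intros eta Heta.
      set (Cst := K * (Rl + Rl) * N + 1).
      assert (HCst : 0 < Cst) by (unfold Cst; assert (0 <= K * (Rl + Rl) * N) by (apply Rmult_le_pos; [apply Rmult_le_pos|]; lra); lra).
      destruct (Hsmall_n (eta / Cst)) as [N0 HN0]; [apply Rdiv_lt_0_compat; lra|].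
      exists N0. intros n Hn. rewrite p0_id by exact Ht.
      change (phin (Datatypes.S n) t) with (Phi (phin n) t).
      destruct (phin_inv n) as [C1 B1]. destruct (Rn_facts n) as [R1 _].
      assert (HD : 0 <= Rl - Rn n) by (generalize (HRnl n); lra).
      assert (Hdiff : forall s, 0 <= s -> norm (minus (phin n s) (phiL s)) <= (Rl - Rn n) * exp (- B * s)).
      { intros s Hs. rewrite normC_minus_sym, <- (phin_p0 n s). rewrite <- (p0_id s Hs) at 3. apply Htail. }
      eapply Rle_trans; [apply (Phi_diff (phin n) phiL (Rn n) Rl (Rl - Rn n) C1 Hcont R1 HRl0 HD B1 Hbnd' Hdiff t Ht)|].
      assert (H1 : exp (- B * t) <= 1) by (apply exp_nonpos_le1; nra).
      assert (H2 : 0 < exp (- B * t)) by apply exp_pos.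
      assert (H3 : Rn n <= Rl) by apply HRnl.
      specialize (HN0 n Hn).
      apply Rle_trans with (K * (Rl - Rn n) * (Rl + Rl) * N).
      { assert (0 <= K * (Rl - Rn n) * (Rn n + Rl) * N) by (apply Rmult_le_pos; [apply Rmult_le_pos; [apply Rmult_le_pos|]|]; lra).
        apply Rle_trans with (K * (Rl - Rn n) * (Rn n + Rl) * N); [nra|].
        apply Rmult_le_compat_r; [lra|]. apply Rmult_le_compat_l; [apply Rmult_le_pos; lra|lra]. }
      apply Rle_trans with ((Rl - Rn n) * Cst); [unfold Cst; nra|].
      apply Rle_trans with ((eta / Cst) * Cst); [apply Rmult_le_compat_r; lra|]. right; field; lra. }
  assert (Hvb : forall s, 0 <= s -> norm (vof phiL s) <= K * Rl ^ 2 + J)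
    by exact (vof_gbound phiL Rl HRl0 Hbnd').
  exists phiL. split; [|split].
  - intros t Ht eps Heps. destruct (epsC_of_cont phiL t (Hcont t) eps Heps) as [d [Hd H]].
    exists d. split; [exact Hd|]. intros s Hs Hst. apply H. exact Hst.
  - intros t Ht.
    assert (E : minus (iF (phiL t)) (S t (iF f0)) = iF (Wv (vof phiL) 0 t)).
    { rewrite (Hfix t Ht). unfold Phi. rewrite p0_id by exact Ht.
      rewrite (linC_plus iF) by exact (proj1 iF_blin). rewrite HSF by exact Ht. apply minusC_plus_l. }
    rewrite E.
    destruct (Req_dec t 0) as [->|Hne].
    + rewrite (W_tt (vof phiL) _ 0 (vof_cont phiL Hcont) Hvb (Rle_refl 0)).
      rewrite (linC_zero iF) by exact (proj1 iF_blin). exact (is_RInt_point _ 0).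
    + eapply is_RInt_ext; [|apply (L3 (vof phiL) _ t (vof_cont phiL Hcont) Hvb); lra].
      intros x Hx. rewrite Rmin_left in Hx by lra. rewrite Rmax_right in Hx by lra.
      unfold vof, xi'. rewrite Rmax_right by lra. rewrite p0_id by lra. reflexivity.
  - intros t Ht. eapply Rle_trans; [apply Hbnd', Ht|]. apply Rmult_le_compat_r; [apply Rlt_le, exp_pos|exact HRls].
Qed.

End Main.

Theorem proposition5p12
  (Fp F Fm : CompleteNormedModule R_AbsRing)
  (iP : Fp -> F) (iF : F -> Fm)
  (A : Fp -> Fm)
  (S : R -> Fm -> Fm) (SF : R -> F -> F) (SmF : R -> Fm -> F)
  (B N K J sigma : R) (mu : R -> R)
  (Pq : F -> F -> Fm) (xi : R -> Fm) (f0 : F)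
  (* F_+ ↪ F ↪ F_- *)
  (HiP : dense_embedding iP) (HiF : dense_embedding iF)
  (* A linear, graph norm equivalent to the F_+ norm *)
  (HAlin : linear_map A)
  (HAnorm : exists c1 c2, 0 < c1 /\ 0 < c2 /\ forall f : Fp,
      c1 * norm f <= norm (iF (iP f)) + norm (A f) /\
      norm (iF (iP f)) + norm (A f) <= c2 * norm f)
  (* A generates a C0-semigroup on F_- with domain F_+ *)
  (HS : generates_C0_semigroup (fun f => iF (iP f)) A S)
  (* e^{tA} maps F into F, jointly continuous F x [0,oo) -> F *)
  (HSF : forall t f, 0 <= t -> iF (SF t f) = S t (iF f))
  (HSFc : jointly_continuous_on (fun t => 0 <= t) SF)
  (* e^{tA} maps F_- into F for t > 0, jointly continuous F_- x (0,oo) -> F *)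
  (HSmF : forall t f, 0 < t -> iF (SmF t f) = S t f)
  (HSmFc : jointly_continuous_on (fun t => 0 < t) SmF)
  (HB : 0 <= B) (HN : 0 < N)
  (HestF : forall t (f : F), 0 <= t -> norm (SF t f) <= exp (- B * t) * norm f)
  (HestFm : forall t (f : Fm), 0 < t -> norm (SmF t f) <= mu t * exp (- B * t) * norm f)
  (Hmu_cont : forall t, 0 < t -> continuity_pt mu t)
  (Hmu_pos : forall t, 0 < t -> 0 < mu t)
  (Hsigma : 0 < sigma <= 1)
  (Hmu0 : exists C delta, 0 < delta /\ forall t, 0 < t < delta ->
      mu t <= C * Rpower t (- (1 - sigma)))
  (* ∫_0^t mu(t-s) e^{-Bs} ds <= N (improper at s = t; nonneg integrand,
     so stated via all truncations [0, t - eps]) *)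
  (Hmu_int : forall t eps, 0 < eps < t ->
      RInt (fun s => mu (t - s) * exp (- B * s)) 0 (t - eps) <= N)
  (* quadratic nonlinearity *)
  (HPbil : is_bilinear Pq) (HK : 0 < K)
  (HPbnd : forall f g, norm (Pq f g) <= K * norm f * norm g)
  (* forcing *)
  (Hxi_lip : locally_lipschitz_nonneg xi) (HJ : 0 <= J)
  (Hxi_bnd : forall t, 0 <= t -> norm (xi t) <= J * exp (- 2 * B * t))
  (* smallness *)
  (Hsmall : 4 * K * N * (norm f0 + N * J) <= 1) :
  exists phi : R -> F,
    continuous_on_nonneg phi /\
    (forall t, 0 <= t ->
       is_RInt (fun s => S (t - s) (plus (Pq (phi s) (phi s)) (xi s))) 0 t
               (minus (iF (phi t)) (S t (iF f0)))) /\
    (forall t, 0 <= t ->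
       norm (phi t) <= (norm f0 + N * J) * Xfun (4 * K * N * (norm f0 + N * J))
                       * exp (- B * t)).
Proof.
  intros. eapply main_result; eassumption.
Qed.
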